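(* Fix constants $\beta_\text{m}>0$, $\beta_\text{I}>0$, a target threshold $\gamma_\text{t}>0$, LoS probabilities $p_\text{L}(\theta_\text{m}),p_\text{L}(\theta_\text{I})\in[0,1]$ and Rician factors $K_\text{m}=K_\text{m}(\theta_\text{m})>0$, $K_\text{I}=K_\text{I}(\theta_\text{I})>0$. Let $h_\text{m},h_\text{I}$ be independent fading gains distributed as in the context (each link is independently LoS with probability $p_\text{L}(\theta_i)$ and NLoS otherwise), and let $\gamma=\frac{h_\text{m}\beta_\text{m}}{h_\text{I}\beta_\text{I}}$. Then the outage probability $p_\text{o}=\mathbb{P}[\gamma<\gamma_\text{t}]$ equals $$p_\text{o}=p_\text{L}(\theta_\text{m})p_\text{L}(\theta_\text{I})\,p_\text{o}^{(\text{L,L})}+p_\text{L}(\theta_\text{m})(1-p_\text{L}(\theta_\text{I}))\,p_\text{o}^{(\text{L,N})}+(1-p_\text{L}(\theta_\text{m}))p_\text{L}(\theta_\text{I})\,p_\text{o}^{(\text{N,L})}+(1-p_\text{L}(\theta_\text{m}))(1-p_\text{L}(\theta_\text{I}))\,p_\text{o}^{(\text{N,N})},$$ where $p_\text{o}^{(e_\text{m},e_\text{I})}=\mathbb{P}[\gamma<\gamma_\text{t}\mid \text{main link in environment } e_\text{m},\ \text{interference link in environment } e_\text{I}]$ is given by: (1) both LoS: $$p_\text{o}^{(\text{L,L})}=1-Q\!\left(\sqrt{\frac{2K_\text{m}\beta_\text{m}}{\beta_\text{m}+\gamma_\text{t}\beta_\text{I}}},\sqrt{\frac{2\gamma_\text{t}K_\text{I}\beta_\text{I}}{\beta_\text{m}+\gamma_\text{t}\beta_\text{I}}}\right)+\frac{\gamma_\text{t}\beta_\text{I}}{\beta_\text{m}+\gamma_\text{t}\beta_\text{I}}\exp\!\left(-\frac{K_\text{m}\beta_\text{m}+\gamma_\text{t}K_\text{I}\beta_\text{I}}{\beta_\text{m}+\gamma_\text{t}\beta_\text{I}}\right)I_0\!\left(\frac{2\beta_\text{m}}{\beta_\text{m}+\gamma_\text{t}\beta_\text{I}}\sqrt{\frac{\gamma_\text{t}K_\text{m}K_\text{I}\beta_\text{I}}{\beta_\text{m}}}\right);$$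 (2) main LoS, interference NLoS: $$p_\text{o}^{(\text{L,N})}=\frac{\gamma_\text{t}\beta_\text{I}}{2\beta_\text{m}+\gamma_\text{t}\beta_\text{I}}\exp\!\left(-\frac{2K_\text{m}\beta_\text{m}}{2\beta_\text{m}+\gamma_\text{t}\beta_\text{I}}\right);$$ (3) main NLoS, interference LoS: $$p_\text{o}^{(\text{N,L})}=1-\frac{\beta_\text{m}}{2\gamma_\text{t}\beta_\text{I}+\beta_\text{m}}\exp\!\left(-\frac{2\gamma_\text{t}K_\text{I}\beta_\text{I}}{2\gamma_\text{t}\beta_\text{I}+\beta_\text{m}}\right);$$ (4) both NLoS: $$p_\text{o}^{(\text{N,N})}=\frac{\gamma_\text{t}\beta_\text{I}}{\beta_\text{m}+\gamma_\text{t}\beta_\text{I}}.$$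
   Context: Model: a receiver gets a desired signal over the main link (index m) and an interfering signal over the interference link (index I). For $i\in\{\text{m},\text{I}\}$, $\beta_i=\ell_i^{-\alpha_i(\theta_i)}P_i>0$ is the average received power (link distance $\ell_i$, path-loss exponent $\alpha_i(\theta_i)$, transmit power $P_i$), and $\theta_i$ is the elevation angle of link $i$. The signal-to-interference ratio is $\gamma=\frac{h_\text{m}\beta_\text{m}}{h_\text{I}\beta_\text{I}}$, where $h_\text{m},h_\text{I}$ are independent random fading gains. Each link $i$ is, independently, in a LoS environment with probability $p_\text{L}(\theta_i)$ (in the paper $p_\text{L}(\theta)=\frac{1}{1+a_1\exp\{-b_1(\theta-a_1)\}}$) and in an NLoS environment with probability $1-p_\text{L}(\theta_i)$. Given LoS, $h_i$ has density $f_\text{L}(h)=\frac12\exp\!\left(-K_i-\frac h2\right)I_0\!\left(\sqrt{2K_ih}\right)$, $h\ge0$ (noncentral chi-squared with 2 degrees of freedom and noncentrality $2K_i$), where $K_i=K_i(\theta_i)>0$ is the Rician factor (in the paper $K(\theta)=a_3\exp(b_3\theta)$). Given NLoS, $h_i$ has density $f_\text{N}(h)=e^{-h}$, $h\ge0$. $I_0$ is the modified Bessel function of the first kind of order zero, and $Q(a,b)=\int_b^\infty x\exp\!\left(-\frac{x^2+a^2}{2}\right)I_0(ax)\,dx$ is the first-order Marcum Q-function. *)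

(* Defs.v *)
From Stdlib Require Import Reals Lra ClassicalEpsilon.
Open Scope R_scope.

(* A chosen real satisfying P (if one exists; unique in all uses below). *)
Definition the_real (P : R -> Prop) : R := epsilon (inhabits 0) P.

Definition series_sum (u : nat -> R) : R :=
  the_real (fun l => Un_cv (fun n => sum_f_R0 u n) l).

Definition bessel_I0 (x : R) : R :=
  series_sum (fun k => (x / 2) ^ (2 * k) / (INR (Factorial.fact k)) ^ 2).

Definition RInt (f : R -> R) (a b : R) : R :=
  the_real (fun l => exists pr : Riemann_integrable f a b, RiemannInt pr = l).

Definition RInt_inf (f : R -> R) (a : R) : R :=
  the_real (fun l => forall eps, 0 < eps ->
    exists M, forall b, M <= b -> Rabs (RInt f a b - l) < eps).

Definition marcumQ (a b : R) : R :=
  RInt_inf (fun x => x * exp (- (x ^ 2 + a ^ 2) / 2) * bessel_I0 (a * x)) b.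

(* LoS: noncentral chi-squared, 2 dof, noncentrality 2K. *)
Definition dens_LoS (K : R) (h : R) : R :=
  / 2 * exp (- K - h / 2) * bessel_I0 (sqrt (2 * K * h)).
Definition dens_NLoS (h : R) : R := exp (- h).

Definition dens_mix (p K : R) (h : R) : R :=
  p * dens_LoS K h + (1 - p) * dens_NLoS h.

(* Outage probability P[ h_m bm / (h_I bI) < gt ] for independent nonnegative
   gains h_m, h_I with densities fm, fI (on [0,oo)):
     int_0^oo fI(y) ( int_0^{gt bI y / bm} fm(x) dx ) dy. *)
Definition outage (fm fI : R -> R) (bm bI gt : R) : R :=
  RInt_inf (fun y => fI y * RInt fm 0 (gt * bI * y / bm)) 0.

Definition po_LL_closed (bm bI gt Km KI : R) : R :=
  1 - marcumQ (sqrt (2 * Km * bm / (bm + gt * bI)))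
              (sqrt (2 * gt * KI * bI / (bm + gt * bI)))
    + gt * bI / (bm + gt * bI)
      * exp (- ((Km * bm + gt * KI * bI) / (bm + gt * bI)))
      * bessel_I0 (2 * bm / (bm + gt * bI) * sqrt (gt * Km * KI * bI / bm)).

Definition po_LN_closed (bm bI gt Km : R) : R :=
  gt * bI / (2 * bm + gt * bI) * exp (- (2 * Km * bm / (2 * bm + gt * bI))).

Definition po_NL_closed (bm bI gt KI : R) : R :=
  1 - bm / (2 * gt * bI + bm) * exp (- (2 * gt * KI * bI / (2 * gt * bI + bm))).

Definition po_NN_closed (bm bI gt : R) : R :=
  gt * bI / (bm + gt * bI).

(* Main.v *)
Require Import Defs.
From Stdlib Require Import Reals Lra Lia ClassicalEpsilon Factorial ZArith.
From Coquelicot Require Import Coquelicot.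
Open Scope R_scope.

Lemma the_real_eq (P : R -> Prop) l :
  P l -> (forall l', P l' -> l' = l) -> the_real P = l.
Proof.
  intros Hl Hu. unfold the_real.
  apply Hu. exact (epsilon_spec (inhabits 0) P (ex_intro _ l Hl)).
Qed.

Lemma is_seriesR_ext (a b : nat -> R) (l : R) :
  (forall n, a n = b n) -> is_series a l -> is_series b l.
Proof. intros H Ha. exact (is_series_ext a b l H Ha). Qed.

Lemma is_seriesR_plus (a b : nat -> R) (la lb : R) :
  is_series a la -> is_series b lb -> is_series (fun n => a n + b n) (la + lb).
Proof. intros. apply (is_series_plus a b la lb); auto. Qed.

Lemma is_seriesR_scal (c : R) (a : nat -> R) (l : R) :
  is_series a l -> is_series (fun n => c * a n) (c * l).
Proof. intros. apply (is_series_scal c a l); auto. Qed.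

Lemma is_seriesR_opp (a : nat -> R) (l : R) :
  is_series a l -> is_series (fun n => - a n) (- l).
Proof. intros H. replace (-l) with (-1*l) by ring.
  apply (is_seriesR_ext (fun n => (-1) * a n)). intros; ring. now apply is_seriesR_scal. Qed.

Lemma is_seriesR_minus (a b : nat -> R) (la lb : R) :
  is_series a la -> is_series b lb -> is_series (fun n => a n - b n) (la - lb).
Proof. intros. apply is_seriesR_plus; auto. now apply is_seriesR_opp. Qed.

Lemma is_series_lim (a : nat -> R) (l : R) :
  is_series a l -> is_lim_seq (sum_f_R0 a) l.
Proof. intros H. apply is_lim_seq_Reals. apply is_series_Reals in H.
  intros e He. destruct (H e He) as [N HN]. exists N. intros n Hn. apply HN. lia. Qed.

Lemma lim_is_series (a : nat -> R) (l : R) :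
  is_lim_seq (sum_f_R0 a) l -> is_series a l.
Proof. intros H. apply is_series_Reals. apply is_lim_seq_Reals in H.
  intros e He. destruct (H e He) as [N HN]. exists N. intros n Hn. apply HN. lia. Qed.

Lemma series_sum_eq (u : nat -> R) l : is_series u l -> series_sum u = l.
Proof.
  intros H. unfold series_sum. apply the_real_eq.
  - apply is_lim_seq_Reals. now apply is_series_lim.
  - intros l' H'. apply is_lim_seq_Reals in H'.
    assert (H2 := is_series_lim _ _ H).
    assert (Finite l' = Finite l).
    { apply is_lim_seq_unique in H'. apply is_lim_seq_unique in H2. rewrite <- H', <- H2. reflexivity. }
    congruence.
Qed.

Lemma is_series_le_bound (a : nat -> R) (l : R) :
  is_series a l -> (forall n, 0 <= a n) -> forall n, sum_f_R0 a n <= l.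
Proof.
  intros H Hp n. apply is_lim_seq_incr_compare.
  now apply is_series_lim. intros m. simpl. specialize (Hp (S m)). lra.
Qed.

Lemma is_series_ge0 (a : nat -> R) (l : R) :
  is_series a l -> (forall n, 0 <= a n) -> 0 <= l.
Proof. intros H Hp. eapply Rle_trans; [|apply (is_series_le_bound a l H Hp 0)].
  simpl. apply Hp. Qed.

Lemma is_series_term_le (a : nat -> R) (l : R) :
  is_series a l -> (forall n, 0 <= a n) -> forall n, a n <= l.
Proof.
  intros H Hp n. eapply Rle_trans; [|apply (is_series_le_bound a l H Hp n)].
  destruct n. simpl; lra. simpl.
  assert (0 <= sum_f_R0 a n). { apply cond_pos_sum. auto. } lra.
Qed.

Lemma is_series_le (a b : nat -> R) (la lb : R) :
  is_series a la -> is_series b lb -> (forall n, a n <= b n) -> la <= lb.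
Proof.
  intros Ha Hb H.
  apply is_series_lim in Ha. apply is_series_lim in Hb.
  assert (Rbar_le la lb). { apply (is_lim_seq_le (sum_f_R0 a) (sum_f_R0 b) la lb); auto. intros n.
    induction n; simpl; auto. specialize (H (S n)); lra. }
  exact H0.
Qed.

Lemma is_series_abs_le (a b : nat -> R) (la lb : R) :
  is_series a la -> is_series b lb -> (forall n, Rabs (a n) <= b n) -> Rabs la <= lb.
Proof.
  intros Ha Hb H. apply Rabs_le. split.
  - assert (- lb <= la). { apply is_series_le with (fun n => - b n) a; auto.
      now apply is_seriesR_opp. intros n; specialize (H n). apply Rabs_le_between in H. lra. }
    lra.
  - apply is_series_le with a b; auto. intros n; specialize (H n).
    eapply Rle_trans; [apply Rle_abs|exact H].
Qed.

Lemma ex_series_bound (a b : nat -> R) :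
  (forall n, 0 <= a n <= b n) -> ex_series b -> ex_series a.
Proof.
  intros H Hb. apply (ex_series_le a b); auto. intros n.
  change (norm (a n)) with (Rabs (a n)). rewrite Rabs_pos_eq; apply H.
Qed.

Lemma is_series_finite (a : nat -> R) N :
  (forall n, (N < n)%nat -> a n = 0) -> is_series a (sum_f_R0 a N).
Proof.
  intros H. apply lim_is_series.
  apply is_lim_seq_ext_loc with (fun _ => sum_f_R0 a N).
  exists N. intros n Hn. induction n.
  - assert (N = 0)%nat by lia. subst; auto.
  - destruct (Nat.eq_dec N (S n)). subst; auto.
    simpl. rewrite <- IHn by lia. rewrite H by lia. ring.
  - apply is_lim_seq_const.
Qed.

Lemma is_series_exp x : is_series (fun n => x ^ n / INR (fact n)) (exp x).
Proof.
  assert (H := is_exp_Reals x). unfold is_pseries in H.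
  eapply is_seriesR_ext; [|exact H]. intros n. simpl.
  rewrite pow_n_pow. unfold scal; simpl. unfold mult; simpl. unfold Rdiv. ring.
Qed.

Definition lim_inf (g : R -> R) (l : R) :=
  forall eps, 0 < eps -> exists M, forall b, M <= b -> Rabs (g b - l) < eps.

Lemma lim_inf_unique g l1 l2 : lim_inf g l1 -> lim_inf g l2 -> l1 = l2.
Proof.
  intros H1 H2. apply Rle_antisym; apply Rnot_lt_le; intros Hlt.
  - destruct (H1 ((l1-l2)/2)) as [M1 HM1]. lra.
    destruct (H2 ((l1-l2)/2)) as [M2 HM2]. lra.
    specialize (HM1 (Rmax M1 M2) (Rmax_l _ _)). specialize (HM2 (Rmax M1 M2) (Rmax_r _ _)).
    apply Rabs_def2 in HM1. apply Rabs_def2 in HM2. lra.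
  - destruct (H1 ((l2-l1)/2)) as [M1 HM1]. lra.
    destruct (H2 ((l2-l1)/2)) as [M2 HM2]. lra.
    specialize (HM1 (Rmax M1 M2) (Rmax_l _ _)). specialize (HM2 (Rmax M1 M2) (Rmax_r _ _)).
    apply Rabs_def2 in HM1. apply Rabs_def2 in HM2. lra.
Qed.

Lemma lim_inf_const l : lim_inf (fun _ => l) l.
Proof. intros e He. exists 0. intros. rewrite Rminus_diag, Rabs_R0. auto. Qed.

Lemma lim_inf_plus g h l1 l2 : lim_inf g l1 -> lim_inf h l2 ->
  lim_inf (fun b => g b + h b) (l1 + l2).
Proof.
  intros H1 H2 e He. destruct (H1 (e/2)) as [M1 HM1]. lra.
  destruct (H2 (e/2)) as [M2 HM2]. lra.
  exists (Rmax M1 M2). intros b Hb.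
  specialize (HM1 b (Rle_trans _ _ _ (Rmax_l _ _) Hb)).
  specialize (HM2 b (Rle_trans _ _ _ (Rmax_r _ _) Hb)).
  replace (g b + h b - (l1 + l2)) with ((g b - l1) + (h b - l2)) by ring.
  eapply Rle_lt_trans. apply Rabs_triang. lra.
Qed.

Lemma lim_inf_scal c g l : lim_inf g l -> lim_inf (fun b => c * g b) (c * l).
Proof.
  intros H e He. destruct (H (e / (Rabs c + 1))) as [M HM].
  apply Rdiv_lt_0_compat; auto. pose proof (Rabs_pos c); lra.
  exists M. intros b Hb. specialize (HM b Hb).
  replace (c * g b - c * l) with (c * (g b - l)) by ring. rewrite Rabs_mult.
  pose proof (Rabs_pos c).
  apply Rle_lt_trans with ((Rabs c + 1) * Rabs (g b - l)).
  apply Rmult_le_compat_r. apply Rabs_pos. lra.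
  apply Rmult_lt_reg_l with (/ (Rabs c + 1)). apply Rinv_0_lt_compat; lra.
  rewrite <- Rmult_assoc, Rinv_l by lra. rewrite Rmult_1_l. unfold Rdiv in HM. lra.
Qed.

Lemma lim_inf_minus g h l1 l2 : lim_inf g l1 -> lim_inf h l2 ->
  lim_inf (fun b => g b - h b) (l1 - l2).
Proof. intros H1 H2. apply lim_inf_plus; auto.
  replace (-l2) with (-1*l2) by ring.
  eapply (fun H => H). intros e He. destruct (lim_inf_scal (-1) h l2 H2 e He) as [M HM].
  exists M. intros b Hb. specialize (HM b Hb). replace (- h b - (-1*l2)) with (-1 * h b - -1*l2) by ring. auto. Qed.

Lemma lim_inf_ext g h l : (exists M, forall b, M <= b -> g b = h b) ->
  lim_inf g l -> lim_inf h l.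
Proof.
  intros [M0 HM0] H e He. destruct (H e He) as [M HM]. exists (Rmax M M0).
  intros b Hb. rewrite <- HM0. apply HM. eapply Rle_trans; [apply Rmax_l|eauto].
  eapply Rle_trans; [apply Rmax_r|eauto].
Qed.

Lemma lim_inf_squeeze g h l : (exists M, forall b, M <= b -> Rabs (g b - l) <= h b) ->
  lim_inf h 0 -> lim_inf g l.
Proof.
  intros [M0 HM0] H e He. destruct (H e He) as [M HM]. exists (Rmax M M0).
  intros b Hb. specialize (HM b (Rle_trans _ _ _ (Rmax_l _ _) Hb)).
  specialize (HM0 b (Rle_trans _ _ _ (Rmax_r _ _) Hb)).
  rewrite Rminus_0_r in HM. eapply Rle_lt_trans. exact HM0.
  eapply Rle_lt_trans. apply Rle_abs. exact HM.
Qed.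

Lemma lim_inf_sum (g : nat -> R -> R) (l : nat -> R) N :
  (forall n, (n <= N)%nat -> lim_inf (g n) (l n)) ->
  lim_inf (fun b => sum_f_R0 (fun n => g n b) N) (sum_f_R0 l N).
Proof.
  induction N; intros H; simpl.
  - apply H; lia.
  - apply lim_inf_plus. apply IHN; intros; apply H; lia. apply H; lia.
Qed.

Lemma lim_inf_incr_le g l : lim_inf g l ->
  (forall x y, x <= y -> g x <= g y) -> forall x, g x <= l.
Proof.
  intros H Hm x. apply Rnot_lt_le. intros Hlt.
  destruct (H (g x - l)) as [M HM]. lra.
  specialize (HM (Rmax M x) (Rmax_l _ _)).
  assert (g x <= g (Rmax M x)) by (apply Hm, Rmax_r).
  apply Rabs_def2 in HM. lra.
Qed.

Lemma lim_inf_exp_neg a : 0 < a -> lim_inf (fun b => exp (- (a * b))) 0.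
Proof.
  intros Ha e He. exists (- ln e / a + 1). intros b Hb.
  rewrite Rminus_0_r, Rabs_pos_eq by (left; apply exp_pos).
  assert (- (a * b) < ln e).
  { apply Rmult_le_compat_l with (r := a) in Hb; [|lra].
    rewrite Rmult_plus_distr_l in Hb. unfold Rdiv in Hb.
    rewrite <- Rmult_assoc, (Rmult_comm a (- ln e)), Rmult_assoc, Rinv_r in Hb by lra. lra. }
  rewrite <- (exp_ln e) by auto. now apply exp_increasing.
Qed.

Lemma Defs_RInt_eq f a b : ex_RInt f a b -> Defs.RInt f a b = RInt f a b.
Proof.
  intros H. unfold Defs.RInt. apply the_real_eq.
  - exists (ex_RInt_Reals_0 _ _ _ H). symmetry. apply RInt_Reals.
  - intros l [pr Hpr]. rewrite <- Hpr. symmetry. apply RInt_Reals.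
Qed.

Definition Iinf (f : R -> R) (a l : R) :=
  (forall b, a <= b -> ex_RInt f a b) /\ lim_inf (fun b => RInt f a b) l.

Lemma Iinf_RInt_inf f a l : Iinf f a l -> RInt_inf f a = l.
Proof.
  intros [Hex Hl]. unfold RInt_inf. apply the_real_eq.
  - intros e He. destruct (Hl e He) as [M HM]. exists (Rmax M a). intros b Hb.
    rewrite Defs_RInt_eq. apply HM. eapply Rle_trans; [apply Rmax_l|eauto].
    apply Hex. eapply Rle_trans; [apply Rmax_r|eauto].
  - intros l' Hl'. apply (lim_inf_unique (fun b => RInt f a b)); auto.
    intros e He. destruct (Hl' e He) as [M HM]. exists (Rmax M a). intros b Hb.
    rewrite <- Defs_RInt_eq. apply HM. eapply Rle_trans; [apply Rmax_l|eauto].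
    apply Hex. eapply Rle_trans; [apply Rmax_r|eauto].
Qed.

Lemma Iinf_ext f g a l : (forall x, a <= x -> f x = g x) -> Iinf f a l -> Iinf g a l.
Proof.
  intros Hfg [Hex Hl]. split.
  - intros b Hb. apply (ex_RInt_ext f). intros x Hx. apply Hfg.
    rewrite Rmin_left in Hx by auto. lra. auto.
  - apply lim_inf_ext with (fun b => RInt f a b); auto. exists a. intros b Hb.
    apply RInt_ext. intros x Hx. apply Hfg. rewrite Rmin_left in Hx by auto. lra.
Qed.

Lemma RIntR_plus f g a b : ex_RInt f a b -> ex_RInt g a b ->
  RInt (fun x => f x + g x) a b = RInt f a b + RInt g a b.
Proof. intros. apply (RInt_plus f g a b); auto. Qed.

Lemma RIntR_scal f a b c : ex_RInt f a b ->
  RInt (fun x => c * f x) a b = c * RInt f a b.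
Proof. intros. apply (RInt_scal f a b c); auto. Qed.

Lemma RIntR_minus f g a b : ex_RInt f a b -> ex_RInt g a b ->
  RInt (fun x => f x - g x) a b = RInt f a b - RInt g a b.
Proof. intros. apply (RInt_minus f g a b); auto. Qed.

Lemma ex_RIntR_plus f g a b : ex_RInt f a b -> ex_RInt g a b ->
  ex_RInt (fun x => f x + g x) a b.
Proof. intros. apply (ex_RInt_plus f g a b); auto. Qed.

Lemma ex_RIntR_scal f a b c : ex_RInt f a b -> ex_RInt (fun x => c * f x) a b.
Proof. intros. apply (ex_RInt_scal f a b c); auto. Qed.

Lemma ex_RIntR_minus f g a b : ex_RInt f a b -> ex_RInt g a b ->
  ex_RInt (fun x => f x - g x) a b.
Proof. intros. apply (ex_RInt_minus f g a b); auto. Qed.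

Lemma Iinf_plus f g a l1 l2 : Iinf f a l1 -> Iinf g a l2 ->
  Iinf (fun x => f x + g x) a (l1 + l2).
Proof.
  intros [Hf Lf] [Hg Lg]. split.
  - intros b Hb. apply ex_RIntR_plus; auto.
  - apply lim_inf_ext with (fun b => RInt f a b + RInt g a b).
    exists a. intros b Hb. rewrite RIntR_plus; auto.
    now apply lim_inf_plus.
Qed.

Lemma Iinf_scal f a c l : Iinf f a l -> Iinf (fun x => c * f x) a (c * l).
Proof.
  intros [Hf Lf]. split.
  - intros b Hb. apply ex_RIntR_scal; auto.
  - apply lim_inf_ext with (fun b => c * RInt f a b).
    exists a. intros b Hb. rewrite RIntR_scal; auto.
    now apply lim_inf_scal.
Qed.

Lemma Iinf_minus f g a l1 l2 : Iinf f a l1 -> Iinf g a l2 ->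
  Iinf (fun x => f x - g x) a (l1 - l2).
Proof.
  intros [Hf Lf] [Hg Lg]. split.
  - intros b Hb. apply ex_RIntR_minus; auto.
  - apply lim_inf_ext with (fun b => RInt f a b - RInt g a b).
    exists a. intros b Hb. rewrite RIntR_minus; auto.
    now apply lim_inf_minus.
Qed.

Lemma ex_RInt_sum (u : nat -> R -> R) a b N :
  (forall n, ex_RInt (u n) a b) -> ex_RInt (fun x => sum_f_R0 (fun n => u n x) N) a b.
Proof.
  intros H. induction N; simpl. apply H. apply ex_RIntR_plus; auto.
Qed.

Lemma RInt_sum (u : nat -> R -> R) a b N :
  (forall n, ex_RInt (u n) a b) ->
  RInt (fun x => sum_f_R0 (fun n => u n x) N) a b = sum_f_R0 (fun n => RInt (u n) a b) N.
Proof.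
  intros H. induction N; simpl. reflexivity.
  rewrite RIntR_plus; auto. rewrite IHN; auto. apply ex_RInt_sum; auto.
Qed.

Lemma Iinf_sum (u : nat -> R -> R) (l : nat -> R) a N :
  (forall n, Iinf (u n) a (l n)) ->
  Iinf (fun x => sum_f_R0 (fun n => u n x) N) a (sum_f_R0 l N).
Proof.
  intros H. induction N; simpl. apply H. apply Iinf_plus; auto.
Qed.

Lemma RInt_incr f a b1 b2 : a <= b1 <= b2 -> ex_RInt f a b2 ->
  (forall x, a <= x -> 0 <= f x) -> RInt f a b1 <= RInt f a b2.
Proof.
  intros Hb Hex Hp.
  assert (E1 : ex_RInt f a b1) by (apply (ex_RInt_Chasles_1 f a b1 b2); auto).
  assert (E2 : ex_RInt f b1 b2) by (apply (ex_RInt_Chasles_2 f a b1 b2); auto).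
  rewrite <- (RInt_Chasles f a b1 b2 E1 E2).
  assert (0 <= RInt f b1 b2). { apply RInt_ge_0; try lra; auto. intros; apply Hp; lra. }
  change (plus (RInt f a b1) (RInt f b1 b2)) with (RInt f a b1 + RInt f b1 b2). lra.
Qed.

Lemma Iinf_le f a l : Iinf f a l -> (forall x, a <= x -> 0 <= f x) ->
  forall b, a <= b -> RInt f a b <= l.
Proof.
  intros [Hex Hl] Hp b Hb.
  set (g := fun b => RInt f a (Rmax a b)).
  assert (lim_inf g l). { apply lim_inf_ext with (fun b => RInt f a b); auto.
    exists a. intros; unfold g; rewrite Rmax_right; auto. }
  assert (g b <= l). { apply lim_inf_incr_le; auto. intros x y Hxy. unfold g.
    apply RInt_incr. split. apply Rmax_l. apply Rle_max_compat_l; auto. apply Hex, Rmax_l. auto. }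
  unfold g in H0. rewrite Rmax_right in H0; auto.
Qed.

Lemma is_deriveR_ext (f g : R -> R) x l : (forall t, f t = g t) -> is_derive f x l -> is_derive g x l.
Proof. intros H1 H2. exact (is_derive_ext f g x l H1 H2). Qed.

Definition pois (x : R) (n : nat) : R := exp (- x) * x ^ n / INR (fact n).
Definition Ecdf (x : R) (n : nat) : R := sum_f_R0 (pois x) n.

Lemma INR_fact_pos n : 0 < INR (fact n).
Proof. apply lt_0_INR, lt_O_fact. Qed.

Lemma pois_ge0 x n : 0 <= x -> 0 <= pois x n.
Proof. intros Hx. unfold pois. apply Rmult_le_pos. apply Rmult_le_pos.
  left; apply exp_pos. apply pow_le; auto. left; apply Rinv_0_lt_compat, INR_fact_pos. Qed.

Lemma is_series_pois_r x r : is_series (fun n => pois x n * r ^ n) (exp (- x * (1 - r))).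
Proof.
  replace (exp (- x * (1 - r))) with (exp (- x) * exp (x * r)).
  2:{ rewrite <- exp_plus. f_equal. ring. }
  apply (is_seriesR_ext (fun n => exp (-x) * ((x * r) ^ n / INR (fact n)))).
  intros n. unfold pois. rewrite Rpow_mult_distr. field. apply Rgt_not_eq, INR_fact_pos.
  apply is_seriesR_scal, is_series_exp.
Qed.

Lemma is_series_pois x : is_series (pois x) 1.
Proof.
  replace 1 with (exp (- x * (1 - 1))) by (rewrite Rminus_diag, Rmult_0_r; apply exp_0).
  apply (is_seriesR_ext (fun n => pois x n * 1 ^ n)). intros; rewrite pow1; ring.
  apply is_series_pois_r.
Qed.

Lemma pois_le1 x n : 0 <= x -> pois x n <= 1.
Proof. intros Hx. apply (is_series_term_le (pois x)). apply is_series_pois.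
  intros; now apply pois_ge0. Qed.

Lemma Ecdf_ge0 x n : 0 <= x -> 0 <= Ecdf x n.
Proof. intros. apply cond_pos_sum. intros; now apply pois_ge0. Qed.

Lemma Ecdf_le1 x n : 0 <= x -> Ecdf x n <= 1.
Proof. intros. apply (is_series_le_bound (pois x)). apply is_series_pois. intros; now apply pois_ge0. Qed.

Lemma Ecdf_0 n : Ecdf 0 n = 1.
Proof. induction n; unfold Ecdf in *; simpl.
  unfold pois. simpl. rewrite Ropp_0, exp_0. field.
  rewrite IHn. unfold pois. rewrite pow_i by lia. unfold Rdiv. rewrite Rmult_0_r, Rmult_0_l. ring. Qed.

Lemma pois_S x n : pois x (S n) = pois x n * x / INR (S n).
Proof. unfold pois. rewrite fact_simpl, mult_INR. simpl pow. field.
  split. apply Rgt_not_eq, INR_fact_pos. apply Rgt_not_eq, lt_0_INR; lia. Qed.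

Lemma pois_derive x n :
  is_derive (fun y => pois y (S n)) x (pois x n - pois x (S n)).
Proof.
  unfold pois. auto_derive. auto.
  assert (E1: INR (fact n + n * fact n) = INR (S n) * INR (fact n))
    by (rewrite <- mult_INR; f_equal; simpl; lia).
  assert (E2: (match n with 0%nat => 1 | S _ => INR n + 1 end) = INR (S n))
    by (destruct n; simpl; auto).
  rewrite E1, E2. rewrite fact_simpl, mult_INR.
  simpl pow. field. split. apply Rgt_not_eq, INR_fact_pos. apply Rgt_not_eq, lt_0_INR; lia.
Qed.

Lemma Ecdf_derive x n : is_derive (fun y => Ecdf y n) x (- pois x n).
Proof.
  induction n.
  - unfold Ecdf; simpl. unfold pois. auto_derive. auto. simpl. field.
  - unfold Ecdf. simpl. fold (Ecdf x n).
    apply (is_deriveR_ext (fun y => Ecdf y n + pois y (S n))). intros; reflexivity.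
    replace (- pois x (S n)) with (- pois x n + (pois x n - pois x (S n))) by ring.
    apply (is_derive_plus (fun y => Ecdf y n) (fun y => pois y (S n))); auto.
    apply pois_derive.
Qed.

Lemma pois_ex_derive x n : ex_derive (fun y => pois y n) x.
Proof. unfold pois. auto_derive. auto. Qed.

Lemma pois_cont_lin a n x : continuous (fun u => pois (a * u) n) x.
Proof. apply (@ex_derive_continuous R_AbsRing R_NormedModule). unfold pois. auto_derive. auto. Qed.

Lemma Ecdf_lin_derive a n x :
  is_derive (fun u => - Ecdf (a * u) n / a) x (pois (a * x) n) \/ a = 0.
Proof.
  destruct (Req_dec a 0) as [Ha|Ha]; [right; auto|left].
  assert (H1 : is_derive (fun u => a * u) x a) by (auto_derive; auto; ring).
  assert (H2 := is_derive_comp (fun y => Ecdf y n) (fun u => a * u) x _ _ (Ecdf_derive (a*x) n) H1).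
  simpl in H2.
  apply (is_deriveR_ext (fun u => (- / a) * Ecdf (a * u) n)). intros; unfold Rdiv; ring.
  replace (pois (a * x) n) with ((- / a) * (a * - pois (a * x) n)) by (field; auto).
  apply (is_derive_scal (fun u => Ecdf (a * u) n) x (- / a)). exact H2.
Qed.

Lemma is_RInt_pois a n b : 0 < a ->
  is_RInt (fun u => pois (a * u) n) 0 b ((1 - Ecdf (a * b) n) / a).
Proof.
  intros Ha.
  replace ((1 - Ecdf (a * b) n) / a) with (minus (- Ecdf (a * b) n / a) (- Ecdf (a * 0) n / a)).
  2:{ rewrite Rmult_0_r, Ecdf_0. unfold minus, plus, opp; simpl. field. lra. }
  apply (is_RInt_derive (fun u => - Ecdf (a * u) n / a)).
  - intros x _. destruct (Ecdf_lin_derive a n x); auto. lra.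
  - intros x _. apply pois_cont_lin.
Qed.

Lemma pois_bound y i : 0 <= y -> pois y i <= 2 ^ i * exp (- (/2 * y)).
Proof.
  intros Hy.
  assert (H : (y/2) ^ i / INR (fact i) <= exp (y / 2)).
  { apply (is_series_term_le (fun n => (y/2) ^ n / INR (fact n))). apply is_series_exp.
    intros n. apply Rmult_le_pos. apply pow_le; lra. left; apply Rinv_0_lt_compat, INR_fact_pos. }
  unfold pois.
  replace (y ^ i) with (2 ^ i * (y / 2) ^ i) by (rewrite <- Rpow_mult_distr; f_equal; field).
  replace (exp (- (/ 2 * y))) with (exp (- y) * exp (y / 2)) by (rewrite <- exp_plus; f_equal; field).
  replace (exp (- y) * (2 ^ i * (y / 2) ^ i) / INR (fact i)) with (exp (-y) * 2 ^ i * ((y/2)^i / INR (fact i))) by (unfold Rdiv; ring).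
  replace (2 ^ i * (exp (- y) * exp (y / 2))) with (exp (-y) * 2 ^ i * exp (y/2)) by ring.
  apply Rmult_le_compat_l; auto. apply Rmult_le_pos. left; apply exp_pos. apply pow_le; lra.
Qed.

Lemma Ecdf_lim a n : 0 < a -> lim_inf (fun b => Ecdf (a * b) n) 0.
Proof.
  intros Ha. apply lim_inf_squeeze with (fun b => sum_f_R0 (fun i => 2 ^ i * exp (- (/2 * a * b))) n).
  - exists 0. intros b Hb. rewrite Rminus_0_r, Rabs_pos_eq by (apply Ecdf_ge0; nra).
    unfold Ecdf. apply sum_Rle. intros i _. replace (/2 * a * b) with (/2 * (a * b)) by ring.
    apply pois_bound. nra.
  - replace 0 with (sum_f_R0 (fun i => 0) n).
    2:{ induction n; simpl; auto. rewrite IHn; ring. }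
    apply (lim_inf_sum (fun i b => 2 ^ i * exp (- (/ 2 * a * b)))). intros i _.
    replace 0 with (2 ^ i * 0) by ring. apply lim_inf_scal.
    apply (lim_inf_exp_neg (/2 * a)). lra.
Qed.

Lemma Iinf_pois a n : 0 < a -> Iinf (fun u => pois (a * u) n) 0 (/ a).
Proof.
  intros Ha. split.
  - intros b _. eexists. apply is_RInt_pois; auto.
  - apply lim_inf_ext with (fun b => (1 - Ecdf (a * b) n) / a).
    exists 0. intros b _. symmetry. apply is_RInt_unique, is_RInt_pois; auto.
    replace (/ a) with ((1 - 0) * / a) by ring. unfold Rdiv.
    apply (lim_inf_ext (fun b => / a * (1 - Ecdf (a * b) n))). exists 0; intros; ring.
    rewrite Rmult_comm. apply lim_inf_scal. apply lim_inf_minus. apply lim_inf_const. now apply Ecdf_lim.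
Qed.

Lemma sum_shift_eq (a : nat -> R) N m :
  sum_f_R0 (fun k => a (S N + k)%nat) m = sum_f_R0 a (S N + m) - sum_f_R0 a N.
Proof.
  induction m.
  - simpl. rewrite Nat.add_0_r. ring.
  - change (sum_f_R0 (fun k => a (S N + k)%nat) (S m)) with
      (sum_f_R0 (fun k => a (S N + k)%nat) m + a (S N + S m)%nat). rewrite IHm.
    replace (S N + S m)%nat with (S (S N + m)) by lia.
    change (sum_f_R0 a (S (S N + m))) with (sum_f_R0 a (S N + m) + a (S (S N + m))). ring.
Qed.

Lemma is_series_tail (a : nat -> R) (l : R) N :
  is_series a l -> is_series (fun k => a (S N + k)%nat) (l - sum_f_R0 a N).
Proof.
  intros H. apply lim_is_series, is_lim_seq_Reals. apply is_series_lim, is_lim_seq_Reals in H.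
  intros e He. destruct (H e He) as [K HK]. exists K. intros m Hm.
  rewrite sum_shift_eq. unfold R_dist.
  replace (sum_f_R0 a (S N + m) - sum_f_R0 a N - (l - sum_f_R0 a N)) with (sum_f_R0 a (S N + m) - l) by ring.
  apply HK. lia.
Qed.

Lemma series_RInt (u : nat -> R -> R) (S : R -> R) (M : nat -> R) a b :
  a <= b -> (forall n, ex_RInt (u n) a b) -> ex_RInt S a b ->
  (forall x, a <= x <= b -> is_series (fun n => u n x) (S x)) ->
  (forall n x, a <= x <= b -> Rabs (u n x) <= M n) -> ex_series M ->
  is_series (fun n => RInt (u n) a b) (RInt S a b).
Proof.
  intros Hab Hu HS Hser Hb [Mt HMt].
  apply lim_is_series, is_lim_seq_Reals.
  assert (HM := HMt). apply is_series_lim, is_lim_seq_Reals in HM.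
  intros e He.
  destruct (HM (e / (b - a + 1))) as [N0 HN0].
  { apply Rdiv_lt_0_compat; lra. }
  exists N0. intros N HN. unfold R_dist.
  rewrite <- RInt_sum by auto.
  rewrite Rabs_minus_sym. rewrite <- RIntR_minus by (auto; apply ex_RInt_sum; auto).
  eapply Rle_lt_trans.
  apply abs_RInt_le_const with (M := Mt - sum_f_R0 M N); auto.
  apply ex_RIntR_minus; auto. apply ex_RInt_sum; auto.
  - intros t Ht.
    assert (T1 := is_series_tail _ _ N (Hser t Ht)).
    assert (T2 := is_series_tail _ _ N HMt).
    cbv beta.
    apply (is_series_abs_le _ _ _ _ T1 T2). intros k. apply Hb; auto.
  - specialize (HN0 N HN). unfold R_dist in HN0.
    rewrite Rabs_minus_sym in HN0.
    assert (0 <= Mt - sum_f_R0 M N).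
    { assert (Hnn : forall n, 0 <= M n). { intros n. eapply Rle_trans. apply Rabs_pos.
        apply (Hb n a). lra. }
      assert (T2 := is_series_tail _ _ N HMt). apply is_series_ge0 in T2; auto. }
    rewrite Rabs_pos_eq in HN0 by auto.
    set (d := e / (b - a + 1)) in *.
    assert (Hd : e = (b - a + 1) * d) by (unfold d; field; lra).
    rewrite Hd. nra.
Qed.

Lemma series_Iinf (u : nat -> R -> R) (S : R -> R) a (A : nat -> R) (Atot : R) :
  (forall n x, a <= x -> 0 <= u n x) ->
  (forall x, a <= x -> is_series (fun n => u n x) (S x)) ->
  (forall b, a <= b -> exists M, ex_series M /\ forall n x, a <= x <= b -> u n x <= M n) ->
  (forall b, a <= b -> ex_RInt S a b) ->
  (forall n, Iinf (u n) a (A n)) ->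
  is_series A Atot -> Iinf S a Atot.
Proof.
  intros Hpos Hser Hbd HexS Hu HA.
  assert (Hexu : forall n b, a <= b -> ex_RInt (u n) a b) by (intros n; apply (Hu n)).
  assert (Hser_b : forall b, a <= b -> is_series (fun n => RInt (u n) a b) (RInt S a b)).
  { intros b Hb. destruct (Hbd b Hb) as [M [HM HMb]].
    apply series_RInt with M; auto.
    intros x Hx; apply Hser; lra.
    intros n x Hx. rewrite Rabs_pos_eq. apply HMb; auto. apply Hpos; lra. }
  assert (Hupos : forall n b, a <= b -> 0 <= RInt (u n) a b).
  { intros n b Hb. apply RInt_ge_0; auto. intros; apply Hpos; lra. }
  split; auto.
  intros e He.
  assert (HAl := is_series_lim _ _ HA). apply is_lim_seq_Reals in HAl.
  destruct (HAl (e/2)) as [N HN]. lra.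
  specialize (HN N (Nat.le_refl _)). unfold R_dist in HN.
  assert (Hlim : lim_inf (fun b => sum_f_R0 (fun n => RInt (u n) a b) N) (sum_f_R0 A N)).
  { apply (lim_inf_sum (fun n b => RInt (u n) a b)). intros; apply (Hu n). }
  destruct (Hlim (e/2)) as [B HB]. lra.
  exists (Rmax B a). intros b Hb.
  assert (Hba : a <= b) by (eapply Rle_trans; [apply Rmax_r|eauto]).
  specialize (HB b (Rle_trans _ _ _ (Rmax_l _ _) Hb)).
  assert (Up : RInt S a b <= Atot).
  { apply is_series_le with (fun n => RInt (u n) a b) A; auto.
    intros n. apply Iinf_le; auto. }
  assert (Lo : sum_f_R0 (fun n => RInt (u n) a b) N <= RInt S a b).
  { apply is_series_le_bound; auto. }
  apply Rabs_def2 in HN. apply Rabs_def2 in HB.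
  apply Rabs_def1; lra.
Qed.

Lemma contR_mult (f g : R -> R) x : continuous f x -> continuous g x ->
  continuous (fun y => f y * g y) x.
Proof. intros. apply (continuous_mult f g x); auto. Qed.

Lemma contR_comp (f g : R -> R) x : continuous f x -> continuous g (f x) ->
  continuous (fun y => g (f y)) x.
Proof. intros. apply (continuous_comp f g x); auto. Qed.

Lemma contR_ext (f g : R -> R) x : (forall y, f y = g y) -> continuous f x -> continuous g x.
Proof. intros H Hf. apply (continuous_ext f g x); auto. Qed.

Lemma contR_derive (f : R -> R) x : ex_derive f x -> continuous f x.
Proof. apply (@ex_derive_continuous R_AbsRing R_NormedModule). Qed.

Definition Jc (k : nat) : R := / (INR (fact k)) ^ 2.
Definition J (z : R) : R := PSeries Jc z.

Lemma Jc_ratio : is_lim_seq (fun n => Rabs (Jc (S n) / Jc n)) 0.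
Proof.
  apply is_lim_seq_Reals. intros e He.
  destruct (archimed (/ e)) as [Hup _].
  assert (Hpos: (0 <= up (/ e))%Z).
  { apply le_IZR. left. eapply Rlt_trans; [|exact Hup]. apply Rinv_0_lt_compat; lra. }
  exists (Z.to_nat (up (/ e))). intros n Hn. unfold R_dist. rewrite Rminus_0_r, Rabs_Rabsolu.
  unfold Jc. rewrite fact_simpl, mult_INR.
  assert (F := INR_fact_pos n). assert (P : 0 < INR (S n)) by (apply lt_0_INR; lia).
  replace (/ (INR (S n) * INR (fact n)) ^ 2 / / INR (fact n) ^ 2) with (/ INR (S n) ^ 2).
  2:{ field. lra. }
  rewrite Rabs_pos_eq by (left; apply Rinv_0_lt_compat; nra).
  assert (INR (Z.to_nat (up (/ e))) <= INR n) by (apply le_INR; lia).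
  rewrite INR_IZR_INZ, Z2Nat.id in H by auto.
  assert (Hs : INR (S n) = INR n + 1) by apply S_INR.
  assert (/ e < INR (S n)) by lra.
  assert (1 <= INR (S n)) by (rewrite Hs; pose proof (pos_INR n); lra).
  apply Rle_lt_trans with (/ INR (S n)).
  - apply Rinv_le_contravar; auto. replace (INR (S n) ^ 2) with (INR (S n) * INR (S n)) by ring. nra.
  - rewrite <- (Rinv_inv e). apply Rinv_lt_contravar; auto.
    apply Rmult_lt_0_compat; auto. apply Rinv_0_lt_compat; lra.
Qed.

Lemma Jc_radius : CV_radius Jc = p_infty.
Proof.
  apply CV_radius_infinite_DAlembert. intros n; unfold Jc.
  apply Rgt_not_eq, Rinv_0_lt_compat. apply pow_lt, INR_fact_pos.
  apply Jc_ratio.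
Qed.

Lemma is_series_J z : is_series (fun k => z ^ k / (INR (fact k)) ^ 2) (J z).
Proof.
  assert (H : ex_pseries Jc z) by (apply CV_radius_inside; rewrite Jc_radius; exact I).
  apply PSeries_correct in H. unfold is_pseries in H. fold (J z) in H.
  eapply is_seriesR_ext; [|exact H]. intros n. rewrite pow_n_pow.
  unfold scal; simpl; unfold mult; simpl; unfold Jc, Rdiv. rewrite pow_n_pow. field. apply Rgt_not_eq, INR_fact_pos.
Qed.

Lemma J_cont z : continuous J z.
Proof.
  apply continuity_pt_filterlim. apply PSeries_continuity. rewrite Jc_radius. exact I.
Qed.

Lemma bessel_J x : bessel_I0 x = J ((x / 2) ^ 2).
Proof.
  unfold bessel_I0. apply series_sum_eq.
  eapply is_seriesR_ext; [|apply is_series_J]. intros k. cbv beta. rewrite pow_mult. reflexivity.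
Qed.

Definition dL (K h : R) : R := / 2 * exp (- K - / 2 * h) * J (K * (/ 2 * h)).

Lemma dens_LoS_dL K h : 0 <= K -> 0 <= h -> dens_LoS K h = dL K h.
Proof.
  intros HK Hh. unfold dens_LoS, dL. rewrite bessel_J.
  replace (- K - h / 2) with (- K - / 2 * h) by field. f_equal. f_equal.
  unfold Rdiv. rewrite Rpow_mult_distr, pow2_sqrt by nra. field.
Qed.

Lemma dL_cont K x : continuous (dL K) x.
Proof.
  unfold dL. apply contR_mult.
  - apply contR_derive. auto_derive. auto.
  - apply (contR_comp (fun h => K * (/2 * h)) J). apply contR_derive. auto_derive. auto.
    apply J_cont.
Qed.

Lemma dL_series K h :
  is_series (fun j => pois K j * (/ 2 * pois (/ 2 * h) j)) (dL K h).
Proof.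
  unfold dL. apply (is_seriesR_ext (fun j => / 2 * exp (- K - / 2 * h) * ((K * (/ 2 * h)) ^ j / INR (fact j) ^ 2))).
  - intros j. unfold pois. replace (- K - / 2 * h) with (- K + - (/ 2 * h)) by ring.
    rewrite exp_plus. rewrite Rpow_mult_distr. field. apply Rgt_not_eq, INR_fact_pos.
  - apply is_seriesR_scal, is_series_J.
Qed.

Lemma dL_ge0 K h : 0 <= K -> 0 <= h -> 0 <= dL K h.
Proof. intros. apply (is_series_ge0 _ _ (dL_series K h)). intros j.
  apply Rmult_le_pos. apply pois_ge0; auto. apply Rmult_le_pos. lra. apply pois_ge0. lra. Qed.

Lemma ex_series_pois_scal K c : ex_series (fun j => pois K j * c).
Proof. exists (1 * c). apply (is_seriesR_ext (fun j => c * pois K j)). intros; ring.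
  rewrite Rmult_comm. apply is_seriesR_scal, is_series_pois. Qed.

Lemma ex_RInt_cont (f : R -> R) a b : (forall x, continuous f x) -> ex_RInt f a b.
Proof. intros H. apply (ex_RInt_continuous f). intros; apply H. Qed.

Lemma FL_series K t : 0 <= K -> 0 <= t ->
  is_series (fun j => pois K j * (1 - Ecdf (/ 2 * t) j)) (RInt (dL K) 0 t).
Proof.
  intros HK Ht.
  apply (is_seriesR_ext (fun j => RInt (fun x => pois K j * (/ 2 * pois (/ 2 * x) j)) 0 t)).
  - intros j. rewrite RIntR_scal, RIntR_scal.
    rewrite (is_RInt_unique _ _ _ _ (is_RInt_pois (/2) j t ltac:(lra))). field.
    eexists; apply is_RInt_pois; lra.
    apply ex_RIntR_scal. eexists; apply is_RInt_pois; lra.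
  - apply series_RInt with (M := fun j => pois K j * / 2); auto.
    + intros n. apply ex_RInt_cont. intros x. apply contR_derive. unfold pois. auto_derive. auto.
    + apply ex_RInt_cont, dL_cont.
    + intros x Hx. apply dL_series.
    + intros n x Hx. rewrite Rabs_pos_eq.
      apply Rmult_le_compat_l. apply pois_ge0; auto.
      assert (pois (/2 * x) n <= 1) by (apply pois_le1; lra). lra.
      apply Rmult_le_pos. apply pois_ge0; auto. apply Rmult_le_pos. lra. apply pois_ge0. lra.
    + apply ex_series_pois_scal.
Qed.

Lemma FL_bounds K t : 0 <= K -> 0 <= t -> 0 <= RInt (dL K) 0 t <= 1.
Proof.
  intros HK Ht. assert (H := FL_series K t HK Ht). split.
  - apply (is_series_ge0 _ _ H). intros j. apply Rmult_le_pos. apply pois_ge0; auto.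
    assert (Ecdf (/2 * t) j <= 1) by (apply Ecdf_le1; lra). lra.
  - apply (is_series_le _ _ _ _ H (is_series_pois K)). intros j.
    assert (0 <= Ecdf (/2 * t) j) by (apply Ecdf_ge0; lra).
    assert (0 <= pois K j) by (apply pois_ge0; auto). nra.
Qed.

Lemma exp_le x y : x <= y -> exp x <= exp y.
Proof. intros [H|H]. left; now apply exp_increasing. subst; lra. Qed.

Lemma Ecdf_bound y n : 0 <= y ->
  Ecdf y n <= sum_f_R0 (fun i => 2 ^ i * exp (- (/2 * y))) n.
Proof. intros Hy. unfold Ecdf. apply sum_Rle. intros i _. apply pois_bound; auto. Qed.

Lemma sum_const_mult (f : nat -> R) c n :
  sum_f_R0 (fun i => f i * c) n = sum_f_R0 f n * c.
Proof. induction n; simpl; auto. rewrite IHn; ring. Qed.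

Lemma Ecdf_sq_lim n : lim_inf (fun B => Ecdf (B ^ 2 / 2) n) 0.
Proof.
  apply lim_inf_squeeze with (fun B => sum_f_R0 (fun i => 2 ^ i) n * exp (- (/2 * B))).
  - exists 2. intros B HB. rewrite Rminus_0_r, Rabs_pos_eq by (apply Ecdf_ge0; nra).
    eapply Rle_trans. apply Ecdf_bound. nra. rewrite sum_const_mult.
    apply Rmult_le_compat_l. apply cond_pos_sum; intros; apply pow_le; lra.
    apply exp_le. nra.
  - replace 0 with (sum_f_R0 (fun i => 2 ^ i) n * 0) by ring.
    apply lim_inf_scal, lim_inf_exp_neg. lra.
Qed.

Lemma is_RInt_xpois j b B :
  is_RInt (fun x => x * pois (x ^ 2 / 2) j) b B (Ecdf (b ^ 2 / 2) j - Ecdf (B ^ 2 / 2) j).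
Proof.
  replace (Ecdf (b ^ 2 / 2) j - Ecdf (B ^ 2 / 2) j)
    with (minus (- Ecdf (B ^ 2 / 2) j) (- Ecdf (b ^ 2 / 2) j))
    by (unfold minus, plus, opp; simpl; ring).
  apply (is_RInt_derive (fun x => - Ecdf (x ^ 2 / 2) j)).
  - intros x _.
    assert (H1 : is_derive (fun x => x ^ 2 / 2) x x) by (auto_derive; auto; field).
    assert (H2 := is_derive_comp (fun y => Ecdf y j) (fun x => x ^ 2 / 2) x _ _ (Ecdf_derive (x^2/2) j) H1).
    simpl in H2.
    replace (x * pois (x ^ 2 / 2) j) with (- (x * - pois (x ^ 2 / 2) j)) by ring.
    apply (is_derive_opp (fun x => Ecdf (x ^ 2 / 2) j)). exact H2.
  - intros x _. apply contR_derive. unfold pois. auto_derive. auto.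
Qed.

Lemma Iinf_xpois j b : Iinf (fun x => x * pois (x ^ 2 / 2) j) b (Ecdf (b ^ 2 / 2) j).
Proof.
  split.
  - intros B _. eexists. apply is_RInt_xpois.
  - apply lim_inf_ext with (fun B => Ecdf (b ^ 2 / 2) j - Ecdf (B ^ 2 / 2) j).
    exists b. intros B _. symmetry. apply is_RInt_unique, is_RInt_xpois.
    assert (H := lim_inf_minus _ _ _ _ (lim_inf_const (Ecdf (b^2/2) j)) (Ecdf_sq_lim j)).
    rewrite Rminus_0_r in H. exact H.
Qed.

Definition mq (a x : R) : R := x * exp (- (x ^ 2 + a ^ 2) / 2) * bessel_I0 (a * x).

Lemma mq_series a x :
  is_series (fun j => pois (a ^ 2 / 2) j * (x * pois (x ^ 2 / 2) j)) (mq a x).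
Proof.
  unfold mq. rewrite bessel_J.
  apply (is_seriesR_ext (fun j => x * exp (- (x ^ 2 + a ^ 2) / 2) * (((a * x / 2) ^ 2) ^ j / INR (fact j) ^ 2))).
  - intros j. unfold pois.
    replace (- (x ^ 2 + a ^ 2) / 2) with (- (a ^ 2 / 2) + - (x ^ 2 / 2)) by field.
    rewrite exp_plus. replace ((a * x / 2) ^ 2) with ((a ^ 2 / 2) * (x ^ 2 / 2)) by field.
    rewrite Rpow_mult_distr. field. apply Rgt_not_eq, INR_fact_pos.
  - apply is_seriesR_scal, is_series_J.
Qed.

Lemma mq_cont a x : continuous (mq a) x.
Proof.
  unfold mq. apply (contR_ext (fun x => (x * exp (- (x ^ 2 + a ^ 2) / 2)) * J ((a * x / 2) ^ 2))).
  intros y. rewrite bessel_J. reflexivity.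
  apply contR_mult. apply contR_derive. auto_derive. auto.
  apply (contR_comp (fun x => (a * x / 2) ^ 2) J). apply contR_derive. auto_derive. auto.
  apply J_cont.
Qed.

Lemma marcumQ_series a b : 0 <= b ->
  is_series (fun j => pois (a ^ 2 / 2) j * Ecdf (b ^ 2 / 2) j) (marcumQ a b).
Proof.
  intros Hb.
  assert (Hex : ex_series (fun j => pois (a ^ 2 / 2) j * Ecdf (b ^ 2 / 2) j)).
  { apply ex_series_bound with (fun j => pois (a ^ 2 / 2) j * 1). intros n.
    assert (0 <= pois (a ^ 2 / 2) n) by (apply pois_ge0; nra).
    assert (0 <= Ecdf (b ^ 2 / 2) n <= 1) by (split; [apply Ecdf_ge0|apply Ecdf_le1]; nra).
    split; nra. apply ex_series_pois_scal. }
  destruct Hex as [Qv HQv].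
  replace (marcumQ a b) with Qv; auto.
  symmetry. unfold marcumQ. apply Iinf_RInt_inf. fold (mq a).
  apply (Iinf_ext (mq a)). intros; reflexivity.
  apply series_Iinf with (u := fun j x => pois (a ^ 2 / 2) j * (x * pois (x ^ 2 / 2) j))
                         (A := fun j => pois (a ^ 2 / 2) j * Ecdf (b ^ 2 / 2) j); auto.
  - intros n x Hx. apply Rmult_le_pos. apply pois_ge0; nra.
    apply Rmult_le_pos. lra. apply pois_ge0; nra.
  - intros x _. apply mq_series.
  - intros B HB. exists (fun j => pois (a ^ 2 / 2) j * B). split. apply ex_series_pois_scal.
    intros n x Hx. apply Rmult_le_compat_l. apply pois_ge0; nra.
    assert (pois (x ^ 2 / 2) n <= 1) by (apply pois_le1; nra).
    assert (0 <= pois (x ^ 2 / 2) n) by (apply pois_ge0; nra). nra.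
  - intros B _. apply ex_RInt_cont, mq_cont.
  - intros n. apply (Iinf_scal (fun x => x * pois (x ^ 2 / 2) n)). apply Iinf_xpois.
Qed.

Fixpoint bn (n k : nat) : nat :=
  match n, k with
  | _, O => 1%nat
  | O, S _ => 0%nat
  | S n', S k' => (bn n' k' + bn n' (S k'))%nat
  end.

Lemma bn_SS n k : bn (S n) (S k) = (bn n k + bn n (S k))%nat.
Proof. reflexivity. Qed.

Lemma bn_n0 n : bn n 0 = 1%nat.
Proof. destruct n; reflexivity. Qed.

Lemma bn_small n k : (n < k)%nat -> bn n k = 0%nat.
Proof.
  revert k. induction n; intros k Hk.
  - destruct k. lia. reflexivity.
  - destruct k. lia. simpl. rewrite !IHn by lia. reflexivity.
Qed.

Lemma bn_nn n : bn n n = 1%nat.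
Proof. induction n. reflexivity. simpl. rewrite IHn, bn_small by lia. reflexivity. Qed.

Lemma bn_fact n k : (k <= n)%nat -> (bn n k * fact k * fact (n - k) = fact n)%nat.
Proof.
  revert k. induction n; intros k Hk.
  - assert (k = 0%nat) by lia. subst. reflexivity.
  - destruct k.
    + rewrite bn_n0. simpl. lia.
    + simpl bn. rewrite Nat.sub_succ.
      destruct (Nat.eq_dec k n).
      * subst. rewrite (bn_small n (S n)) by lia. rewrite bn_nn, Nat.sub_diag. simpl fact at 2. lia.
      * assert (H1 := IHn k ltac:(lia)). assert (H2 := IHn (S k) ltac:(lia)).
        replace (n - k)%nat with (S (n - S k)) in H1 by lia.
        change (fact (S (n - S k))) with (S (n - S k) * fact (n - S k))%nat in H1.
        change (fact (S k)) with (S k * fact k)%nat in *.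
        change (fact (S n)) with (S n * fact n)%nat.
        rewrite <- H2 in H1 |- *.
        replace (n - k)%nat with (S (n - S k)) in * by lia.
        change (fact (S (n - S k))) with (S (n - S k) * fact (n - S k))%nat.
        assert (Hn : n = (S k + (n - S k))%nat) by lia.
        set (m := (n - S k)%nat) in *. set (A := bn n k) in *. set (B := bn n (S k)) in *.
        set (F := fact k) in *. set (G := fact m) in *. clearbody m A B F G.
        rewrite Hn. nia.
Qed.

Lemma INR_bn_fact n k : (k <= n)%nat ->
  INR (bn n k) = INR (fact n) / (INR (fact k) * INR (fact (n - k))).
Proof.
  intros H. rewrite <- (bn_fact n k H). rewrite !mult_INR. field.
  split; apply Rgt_not_eq, INR_fact_pos.
Qed.

Definition bz (n : nat) (r : R) (a : nat) : R := INR (bn n a) * r ^ a * (1 - r) ^ (n - a).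

Lemma bz_big n r a : (n < a)%nat -> bz n r a = 0.
Proof. intros H. unfold bz. rewrite bn_small by auto. simpl. ring. Qed.

Lemma bz_0 n r : bz (S n) r 0 = (1 - r) * bz n r 0.
Proof. unfold bz. rewrite !bn_n0. rewrite !Nat.sub_0_r. simpl. ring. Qed.

Lemma bz_S n r a : bz (S n) r (S a) = r * bz n r a + (1 - r) * bz n r (S a).
Proof.
  unfold bz. simpl bn. rewrite plus_INR.
  destruct (Nat.lt_ge_cases n a).
  - rewrite (bn_small n a), (bn_small n (S a)) by lia. simpl. ring.
  - destruct (Nat.eq_dec a n).
    + subst. rewrite (bn_small n (S n)) by lia. rewrite !Nat.sub_diag.
      replace (S n - S n)%nat with 0%nat by lia. simpl. ring.
    + replace (S n - S a)%nat with (n - a)%nat by lia.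
      replace (n - a)%nat with (S (n - S a)) by lia. simpl. ring.
Qed.

Lemma bz_ge0 n r a : 0 <= r <= 1 -> 0 <= bz n r a.
Proof. intros Hr. unfold bz. apply Rmult_le_pos. apply Rmult_le_pos. apply pos_INR.
  apply pow_le; lra. apply pow_le; lra. Qed.

Lemma sum_Sl (f : nat -> R) n : sum_f_R0 f (S n) = f 0%nat + sum_f_R0 (fun i => f (S i)) n.
Proof. induction n. simpl. ring. change (sum_f_R0 f (S (S n))) with (sum_f_R0 f (S n) + f (S (S n))).
  rewrite IHn. simpl. ring. Qed.

Lemma sum_plus (f g : nat -> R) n : sum_f_R0 (fun i => f i + g i) n = sum_f_R0 f n + sum_f_R0 g n.
Proof. induction n; simpl; auto. rewrite IHn; ring. Qed.

Lemma sum_scal (f : nat -> R) c n : sum_f_R0 (fun i => c * f i) n = c * sum_f_R0 f n.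
Proof. induction n; simpl; auto. rewrite IHn; ring. Qed.

Lemma sum_ext (f g : nat -> R) n : (forall i, (i <= n)%nat -> f i = g i) -> sum_f_R0 f n = sum_f_R0 g n.
Proof. intros H. induction n; simpl. apply H; lia. rewrite IHn by (intros; apply H; lia). rewrite H; auto. Qed.

Lemma bin_step n r (g : nat -> R) :
  sum_f_R0 (fun a => bz (S n) r a * g a) (S n) =
  (1 - r) * sum_f_R0 (fun a => bz n r a * g a) n + r * sum_f_R0 (fun a => bz n r a * g (S a)) n.
Proof.
  rewrite sum_Sl. rewrite bz_0.
  rewrite (sum_ext _ (fun i => r * (bz n r i * g (S i)) + (1 - r) * (bz n r (S i) * g (S i)))).
  2:{ intros i _. rewrite bz_S. ring. }
  rewrite sum_plus, !sum_scal.
  assert (E : bz n r 0 * g 0%nat + sum_f_R0 (fun i => bz n r (S i) * g (S i)) n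
              = sum_f_R0 (fun a => bz n r a * g a) n).
  { destruct n. simpl. rewrite (bz_big 0 r 1) by lia. ring.
    rewrite (sum_Sl (fun a => bz (S n) r a * g a)).
    change (sum_f_R0 (fun i => bz (S n) r (S i) * g (S i)) (S n)) with
      (sum_f_R0 (fun i => bz (S n) r (S i) * g (S i)) n + bz (S n) r (S (S n)) * g (S (S n))).
    rewrite (bz_big (S n) r (S (S n))) by lia. ring. }
  rewrite <- E. ring.
Qed.

Lemma sum_bz n r : sum_f_R0 (fun a => bz n r a) n = 1.
Proof.
  induction n.
  - unfold bz. simpl. ring.
  - rewrite (sum_ext _ (fun a => bz (S n) r a * 1)) by (intros; ring).
    rewrite bin_step. rewrite (sum_ext (fun a => bz n r a * 1) (fun a => bz n r a)) by (intros; ring).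
    rewrite IHn. ring.
Qed.

Definition ind (b a : nat) : R := if Nat.leb b a then 1 else 0.

Lemma ind_S b a : ind (S b) (S a) = ind b a.
Proof. reflexivity. Qed.

Lemma ind_bounds b a : 0 <= ind b a <= 1.
Proof. unfold ind. destruct (Nat.leb b a); lra. Qed.

Definition T (p : R) (k a : nat) : R := sum_f_R0 (fun b => bz (S k) p b * ind b a) (S k).
Definition Nn (p : R) (k i : nat) : R := INR (bn (k + i) i) * p ^ i * (1 - p) ^ (S k).
Definition W (p : R) (j k : nat) : R := sum_f_R0 (fun i => Nn p k i) j.
Definition V (p : R) (j k : nat) : R := sum_f_R0 (fun a => bz j (1 - p) a * T p k a) j.

Lemma T_S p k a : T p (S k) (S a) = (1 - p) * T p k (S a) + p * T p k a.
Proof.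
  unfold T. rewrite bin_step. reflexivity.
Qed.

Lemma V_rec p j k : V p (S j) (S k) = p * V p j (S k) + (1 - p) * V p (S j) k.
Proof.
  unfold V at 1. rewrite bin_step.
  replace (1 - (1 - p)) with p by ring.
  rewrite (sum_ext (fun a => bz j (1 - p) a * T p (S k) (S a))
            (fun a => (1 - p) * (bz j (1 - p) a * T p k (S a)) + p * (bz j (1 - p) a * T p k a))).
  2:{ intros. rewrite T_S. ring. }
  rewrite sum_plus, !sum_scal.
  unfold V. rewrite (bin_step j (1 - p) (T p k)). replace (1 - (1 - p)) with p by ring. ring.
Qed.

Lemma N_rec p k i : Nn p (S k) (S i) = (1 - p) * Nn p k (S i) + p * Nn p (S k) i.
Proof.
  unfold Nn. replace (S k + S i)%nat with (S (S k + i)) by lia. rewrite bn_SS.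
  replace (k + S i)%nat with (S k + i)%nat by lia. rewrite plus_INR.
  simpl pow. ring.
Qed.

Lemma N0_rec p k : Nn p (S k) 0 = (1 - p) * Nn p k 0.
Proof. unfold Nn. rewrite !bn_n0. simpl pow. ring. Qed.

Lemma W_rec p j k : W p (S j) (S k) = (1 - p) * W p (S j) k + p * W p j (S k).
Proof.
  induction j.
  - unfold W. simpl sum_f_R0. rewrite N_rec, N0_rec. ring.
  - change (W p (S (S j)) (S k)) with (W p (S j) (S k) + Nn p (S k) (S (S j))).
    change (W p (S (S j)) k) with (W p (S j) k + Nn p k (S (S j))).
    change (W p (S j) (S k)) with (W p j (S k) + Nn p (S k) (S j)) at 2.
    rewrite IHj, N_rec. ring.
Qed.

Lemma W_0k p k : W p 0 k = (1 - p) ^ (S k).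
Proof. unfold W, Nn. simpl sum_f_R0. rewrite bn_n0. simpl. ring. Qed.

Lemma T_k0 p k : T p k 0 = (1 - p) ^ (S k).
Proof.
  unfold T. rewrite sum_Sl.
  rewrite (sum_ext _ (fun i => 0)). 2:{ intros; unfold ind; simpl. ring. }
  assert (Z : forall n, sum_f_R0 (fun _ => 0) n = 0) by (induction n; simpl; auto; rewrite IHn; ring).
  rewrite Z. unfold bz, ind. simpl. ring.
Qed.

Lemma V_0k p k : V p 0 k = (1 - p) ^ (S k).
Proof. unfold V. simpl sum_f_R0. rewrite T_k0. unfold bz. simpl. ring. Qed.

Lemma W_j0 p j : W p j 0 = 1 - p ^ (S j).
Proof.
  induction j.
  - unfold W, Nn. simpl. ring.
  - change (W p (S j) 0) with (W p j 0 + Nn p 0 (S j)). rewrite IHj.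
    unfold Nn. simpl (0 + S j)%nat. rewrite bn_nn. simpl. ring.
Qed.

Lemma T_0a p a : T p 0 a = match a with O => 1 - p | S _ => 1 end.
Proof. unfold T. simpl. unfold bz, ind. simpl. destruct a; simpl; ring. Qed.

Lemma V_j0 p j : V p j 0 = 1 - p ^ (S j).
Proof.
  unfold V. destruct j.
  - simpl. rewrite T_0a. unfold bz. simpl. ring.
  - rewrite sum_Sl. rewrite T_0a.
    rewrite (sum_ext _ (fun i => bz (S j) (1 - p) (S i))). 2:{ intros. rewrite T_0a. ring. }
    assert (H := sum_bz (S j) (1 - p)). rewrite sum_Sl in H.
    assert (H0 : bz (S j) (1 - p) 0 = p ^ (S j)).
    { unfold bz. rewrite bn_n0. simpl. replace (1 - (1 - p)) with p by ring. ring. }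
    rewrite H0 in *. simpl pow in *. lra.
Qed.

Lemma W_eq_V p j k : W p j k = V p j k.
Proof.
  revert k. induction j; intros k.
  - now rewrite W_0k, V_0k.
  - induction k.
    + now rewrite W_j0, V_j0.
    + rewrite W_rec, V_rec, IHk, IHj. ring.
Qed.

Lemma T_bounds p k a : 0 <= p <= 1 -> 0 <= T p k a <= 1.
Proof.
  intros Hp. split.
  - apply cond_pos_sum. intros. apply Rmult_le_pos. apply bz_ge0; auto. apply ind_bounds.
  - rewrite <- (sum_bz (S k) p). apply sum_Rle. intros b _.
    assert (0 <= bz (S k) p b) by (apply bz_ge0; auto). pose proof (ind_bounds b a). nra.
Qed.

Definition G (p : R) (a b : nat) : R := (1 - p) * ind b a + p * ind (S b) a.

Lemma T_G p k a : T p k a = sum_f_R0 (fun b => bz k p b * G p a b) k.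
Proof.
  unfold T. rewrite (bin_step k p (fun b => ind b a)).
  unfold G. rewrite <- !sum_scal, <- sum_plus. apply sum_ext. intros; ring.
Qed.

Lemma G_bounds p a b : 0 <= p <= 1 -> 0 <= G p a b <= 1.
Proof. intros Hp. unfold G. pose proof (ind_bounds b a). pose proof (ind_bounds (S b) a). nra. Qed.

Lemma thinning x r (h : nat -> R) (L : R) : 0 <= x -> 0 <= r <= 1 -> (forall a, 0 <= h a <= 1) ->
  is_series (fun a => pois (x * r) a * h a) L ->
  is_series (fun j => pois x j * sum_f_R0 (fun a => bz j r a * h a) j) L.
Proof.
  intros Hx Hr Hh HL.
  set (X := fun a => (x * r) ^ a / INR (fact a) * h a).
  set (Y := fun m => (x * (1 - r)) ^ m / INR (fact m)).
  assert (HX : is_series X (exp (x * r) * L)).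
  { apply (is_seriesR_ext (fun a => exp (x * r) * (pois (x * r) a * h a))).
    intros a. unfold X, pois. replace (exp (x * r)) with (/ exp (- (x * r))).
    field. split. apply Rgt_not_eq, INR_fact_pos. apply Rgt_not_eq, exp_pos.
    rewrite exp_Ropp, Rinv_inv. auto.
    apply is_seriesR_scal; auto. }
  assert (HY : is_series Y (exp (x * (1 - r)))) by apply is_series_exp.
  assert (HXY := is_series_mult_pos X Y _ _ HX HY).
  assert (H1 : forall n, 0 <= X n).
  { intros n. unfold X. apply Rmult_le_pos. apply Rmult_le_pos. apply pow_le; nra.
    left; apply Rinv_0_lt_compat, INR_fact_pos. apply Hh. }
  assert (H2 : forall n, 0 <= Y n).
  { intros n. unfold Y. apply Rmult_le_pos. apply pow_le; nra.
    left; apply Rinv_0_lt_compat, INR_fact_pos. }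
  specialize (HXY H1 H2).
  apply (is_seriesR_scal (exp (- x))) in HXY.
  replace (exp (- x) * (exp (x * r) * L * exp (x * (1 - r)))) with L in HXY.
  2:{ replace (exp (- x) * (exp (x * r) * L * exp (x * (1 - r)))) with
        (exp (- x + x * r + x * (1 - r)) * L) by (rewrite !exp_plus; ring).
      replace (- x + x * r + x * (1 - r)) with 0 by ring. rewrite exp_0. ring. }
  eapply is_seriesR_ext; [|exact HXY]. intros n. simpl.
  rewrite <- sum_scal. rewrite <- sum_scal. apply sum_ext. intros k Hk.
  unfold X, Y, pois, bz. rewrite INR_bn_fact by auto.
  replace (x ^ n) with (x ^ k * x ^ (n - k)) by (rewrite <- pow_add; f_equal; lia).
  rewrite !Rpow_mult_distr. field.
  repeat split; apply Rgt_not_eq, INR_fact_pos.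
Qed.

Lemma ex_series_bounded (a : nat -> R) B : (forall n, 0 <= a n) ->
  (forall n, sum_f_R0 a n <= B) -> ex_series a.
Proof.
  intros Hp HB. destruct (ex_finite_lim_seq_incr (sum_f_R0 a) B) as [l Hl].
  - intros n. simpl. specialize (Hp (S n)). lra.
  - auto.
  - exists l. now apply lim_is_series.
Qed.

Lemma is_series_finsum (g : nat -> nat -> R) (s : nat -> R) K :
  (forall k, is_series (fun j => g j k) (s k)) ->
  is_series (fun j => sum_f_R0 (fun k => g j k) K) (sum_f_R0 s K).
Proof.
  intros H. induction K; simpl. apply H. apply is_seriesR_plus; auto.
Qed.

Lemma tonelli_le (f : nat -> nat -> R) (r : nat -> R) (L : R) :
  (forall j k, 0 <= f j k) -> (forall j, is_series (f j) (r j)) -> is_series r L ->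
  exists c L', (forall k, is_series (fun j => f j k) (c k)) /\ is_series c L' /\ L' <= L.
Proof.
  intros Hp Hr HL.
  assert (Hc : forall k, ex_series (fun j => f j k)).
  { intros k. apply ex_series_bound with r. intros j. split; auto.
    apply (is_series_term_le (f j)); auto. exists L; auto. }
  exists (fun k => Series (fun j => f j k)).
  assert (Hc' : forall k, is_series (fun j => f j k) (Series (fun j => f j k))).
  { intros k. apply Series_correct, Hc. }
  assert (Hcp : forall k, 0 <= Series (fun j => f j k)).
  { intros k. apply (is_series_ge0 _ _ (Hc' k)). auto. }
  assert (Hpart : forall K, sum_f_R0 (fun k => Series (fun j => f j k)) K <= L).
  { intros K. assert (HS := is_series_finsum f _ K Hc').
    apply (is_series_le _ _ _ _ HS HL). intros j.
    apply (is_series_le_bound (f j)); auto. }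
  destruct (ex_series_bounded _ L Hcp Hpart) as [L' HL'].
  exists L'. repeat split; auto.
  apply is_series_lim in HL'.
  assert (Rbar_le L' L).
  { apply (is_lim_seq_le (sum_f_R0 (fun k => Series (fun j => f j k))) (fun _ => L) L' L); auto. apply is_lim_seq_const. }
  exact H.
Qed.

Lemma tonelli (f : nat -> nat -> R) (r : nat -> R) (L : R) :
  (forall j k, 0 <= f j k) -> (forall j, is_series (f j) (r j)) -> is_series r L ->
  exists c, (forall k, is_series (fun j => f j k) (c k)) /\ is_series c L.
Proof.
  intros Hp Hr HL.
  destruct (tonelli_le f r L Hp Hr HL) as [c [L' [Hc [HL' Hle]]]].
  destruct (tonelli_le (fun k j => f j k) c L' (fun k j => Hp j k) Hc HL') as [r' [L'' [Hr' [HL'' Hle']]]].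
  assert (Hrr : forall j, r' j = r j).
  { intros j. specialize (Hr' j). specialize (Hr j). apply is_series_unique in Hr'.
    apply is_series_unique in Hr. rewrite <- Hr', <- Hr. reflexivity. }
  assert (HL2 : is_series r L'') by (apply (is_seriesR_ext r'); auto).
  assert (L'' = L) by (apply is_series_unique in HL2; apply is_series_unique in HL; congruence).
  subst. exists c. split; auto. replace L with L'; auto. lra.
Qed.

Lemma ind_series B a : 0 <= B ->
  is_series (fun b => pois B b * ind b a) (Ecdf B a).
Proof.
  intros HB.
  replace (Ecdf B a) with (sum_f_R0 (fun b => pois B b * ind b a) a).
  - apply is_series_finite. intros n Hn. unfold ind.
    replace (Nat.leb n a) with false by (symmetry; apply Nat.leb_gt; lia). ring.
  - unfold Ecdf. apply sum_ext. intros i Hi. unfold ind.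
    replace (Nat.leb i a) with true by (symmetry; apply Nat.leb_le; lia). ring.
Qed.

Lemma indS_series B a : 0 <= B ->
  is_series (fun b => pois B b * ind (S b) a) (Ecdf B a - pois B a).
Proof.
  intros HB. destruct a.
  - replace (Ecdf B 0 - pois B 0) with 0 by (unfold Ecdf; simpl; ring).
    apply (is_seriesR_ext (fun _ => 0)). intros; unfold ind; simpl; ring.
    assert (Hz := is_series_finite (fun _ : nat => 0) 0 (fun _ _ => eq_refl)).
    simpl in Hz. exact Hz.
  - replace (Ecdf B (S a) - pois B (S a)) with (Ecdf B a) by (unfold Ecdf; simpl; ring).
    apply (is_seriesR_ext (fun b => pois B b * ind b a)). intros; reflexivity.
    apply ind_series; auto.
Qed.

Lemma G_series B p a : 0 <= B ->
  is_series (fun b => pois B b * G p a b) (Ecdf B a - p * pois B a).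
Proof.
  intros HB. unfold G.
  replace (Ecdf B a - p * pois B a) with ((1 - p) * Ecdf B a + p * (Ecdf B a - pois B a)) by ring.
  apply (is_seriesR_ext (fun b => (1 - p) * (pois B b * ind b a) + p * (pois B b * ind (S b) a))).
  intros; ring.
  apply is_seriesR_plus; apply is_seriesR_scal. apply ind_series; auto. apply indS_series; auto.
Qed.

Lemma ex_series_pois_bounded x (h : nat -> R) : 0 <= x -> (forall n, 0 <= h n <= 1) ->
  ex_series (fun n => pois x n * h n).
Proof.
  intros Hx Hh. apply ex_series_bound with (fun n => pois x n * 1).
  intros n. specialize (Hh n). assert (0 <= pois x n) by (apply pois_ge0; auto). split; nra.
  apply ex_series_pois_scal.
Qed.

Lemma pois_pois_series A B : is_series (fun n => pois A n * pois B n) (exp (- (A + B)) * J (A * B)).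
Proof.
  apply (is_seriesR_ext (fun n => exp (- (A + B)) * ((A * B) ^ n / INR (fact n) ^ 2))).
  - intros n. unfold pois. replace (- (A + B)) with (- A + - B) by ring. rewrite exp_plus.
    rewrite Rpow_mult_distr. field. apply Rgt_not_eq, INR_fact_pos.
  - apply is_seriesR_scal, is_series_J.
Qed.

Lemma LL_series lam mu p Qv : 0 <= lam -> 0 <= mu -> 0 <= p <= 1 ->
  is_series (fun j => pois (lam * (1 - p)) j * Ecdf (mu * p) j) Qv ->
  exists a : nat -> R, (forall k, is_series (fun j => pois lam j * (1 - W p j k)) (a k)) /\
    is_series (fun k => pois mu k * a k)
      (1 - Qv + p * (exp (- (lam * (1 - p) + mu * p)) * J (lam * (1 - p) * (mu * p)))).
Proof.
  intros Hl Hm Hp HQ.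
  set (A := lam * (1 - p)) in *. set (B := mu * p) in *.
  assert (HA : 0 <= A) by (unfold A; nra). assert (HB : 0 <= B) by (unfold B; nra).
  set (Y := fun k => Series (fun a => pois A a * T p k a)).
  assert (HY : forall k, is_series (fun a => pois A a * T p k a) (Y k)).
  { intros k. apply Series_correct, ex_series_pois_bounded; auto. intros; apply T_bounds; auto. }
  assert (H1 : forall k, is_series (fun j => pois lam j * W p j k) (Y k)).
  { intros k. apply (is_seriesR_ext (fun j => pois lam j * sum_f_R0 (fun a => bz j (1 - p) a * T p k a) j)).
    intros j. rewrite W_eq_V. reflexivity.
    apply thinning; auto. lra. intros; apply T_bounds; auto. }
  exists (fun k => 1 - Y k). split.
  { intros k. apply (is_seriesR_ext (fun j => pois lam j - pois lam j * W p j k)). intros; ring.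
    apply is_seriesR_minus. apply is_series_pois. apply H1. }
  assert (H2 : forall a, is_series (fun k => pois mu k * T p k a) (Ecdf B a - p * pois B a)).
  { intros a. apply (is_seriesR_ext (fun k => pois mu k * sum_f_R0 (fun b => bz k p b * G p a b) k)).
    intros k. rewrite T_G. reflexivity.
    apply thinning; auto. intros; apply G_bounds; auto. apply G_series; auto. }
  set (f := fun a k => pois A a * (pois mu k * T p k a)).
  assert (Hf : forall a k, 0 <= f a k).
  { intros a k. unfold f. apply Rmult_le_pos. apply pois_ge0; auto.
    apply Rmult_le_pos. apply pois_ge0; auto. apply T_bounds; auto. }
  assert (Hrows : forall a, is_series (f a) (pois A a * (Ecdf B a - p * pois B a))).
  { intros a. unfold f. apply is_seriesR_scal, H2. }
  assert (Htot : is_series (fun a => pois A a * (Ecdf B a - p * pois B a))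
                   (Qv - p * (exp (- (A + B)) * J (A * B)))).
  { apply (is_seriesR_ext (fun a => pois A a * Ecdf B a - p * (pois A a * pois B a))). intros; ring.
    apply is_seriesR_minus; auto. apply is_seriesR_scal, pois_pois_series. }
  destruct (tonelli f _ _ Hf Hrows Htot) as [c [Hc Hctot]].
  assert (Hcy : forall k, c k = pois mu k * Y k).
  { intros k. specialize (Hc k). apply is_series_unique in Hc. rewrite <- Hc.
    apply is_series_unique.
    apply (is_seriesR_ext (fun a => pois mu k * (pois A a * T p k a))). intros; unfold f; ring.
    apply is_seriesR_scal, HY. }
  replace (1 - Qv + p * (exp (- (A + B)) * J (A * B)))
    with (1 - (Qv - p * (exp (- (A + B)) * J (A * B)))) by ring.
  apply (is_seriesR_ext (fun k => pois mu k - c k)). intros k. rewrite Hcy. ring.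
  apply is_seriesR_minus; auto. apply is_series_pois.
Qed.

Lemma cont_RInt (f : R -> R) a : (forall x, continuous f x) -> forall t, continuous (fun z => RInt f a z) t.
Proof.
  intros Hf t. apply (continuous_RInt_1 f a t (fun z => RInt f a z)).
  apply filter_forall. intros z. apply (RInt_correct f a z). apply ex_RInt_cont; auto.
Qed.

Ltac solve_nz := repeat split; try match goal with
  | |- _ <> _ => apply Rgt_not_eq
  | |- _ = 0 -> False => apply Rgt_not_eq end;
  first [apply INR_fact_pos | apply exp_pos | apply pow_lt; lra | lra | idtac].

Lemma pois_prod al s k i y : 0 < al + s ->
  pois (al * y) k * pois (s * y) i =
  (al ^ k * s ^ i * INR (fact (k + i)) / (INR (fact k) * INR (fact i) * (al + s) ^ (k + i)))
  * pois ((al + s) * y) (k + i).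
Proof.
  intros H. unfold pois.
  replace (- (al * y)) with (- (al * y) - (s * y) + s * y) by ring.
  replace (- ((al + s) * y)) with (- (al * y) - (s * y)) by ring.
  rewrite !Rpow_mult_distr, !pow_add. unfold Rminus. rewrite !exp_plus.
  replace (exp (- (s * y))) with (/ exp (s * y)) by (rewrite exp_Ropp; auto).
  field. solve_nz.
Qed.

Lemma term_Iinf al s k j : 0 < al -> 0 < s ->
  Iinf (fun y => al * pois (al * y) k * (1 - Ecdf (s * y) j)) 0 (1 - W (s / (al + s)) j k).
Proof.
  intros Ha Hs.
  apply (Iinf_ext (fun y => al * pois (al * y) k -
     sum_f_R0 (fun i => (al * (al ^ k * s ^ i * INR (fact (k + i)) /
        (INR (fact k) * INR (fact i) * (al + s) ^ (k + i)))) * pois ((al + s) * y) (k + i)) j)).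
  { intros y _. unfold Ecdf. rewrite Rmult_minus_distr_l, Rmult_1_r. f_equal.
    rewrite <- sum_scal. apply sum_ext. intros i _. rewrite (Rmult_assoc al (pois _ k)), pois_prod by lra. ring. }
  apply Iinf_minus.
  - replace 1 with (al * / al) by (field; lra). apply (Iinf_scal (fun y => pois (al * y) k)).
    apply Iinf_pois; auto.
  - unfold W. apply (Iinf_sum (fun i y => _ * pois ((al + s) * y) (k + i))).
    intros i. unfold Nn.
    replace (INR (bn (k + i) i) * (s / (al + s)) ^ i * (1 - s / (al + s)) ^ S k)
      with ((al * (al ^ k * s ^ i * INR (fact (k + i)) /
        (INR (fact k) * INR (fact i) * (al + s) ^ (k + i)))) * / (al + s)).
    apply (Iinf_scal (fun y => pois ((al + s) * y) (k + i))). apply Iinf_pois. lra.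
    rewrite INR_bn_fact by lia. replace (k + i - i)%nat with k by lia.
    replace (1 - s / (al + s)) with (al / (al + s)) by (field; lra).
    rewrite pow_add. unfold Rdiv. rewrite !Rpow_mult_distr, <- !Rinv_pow by lra. simpl pow.
    field. solve_nz.
Qed.

Lemma dens_NLoS_pois u : dens_NLoS u = pois (1 * u) 0.
Proof. unfold dens_NLoS, pois. simpl. rewrite Rmult_1_l. field. Qed.

Lemma RInt_NLoS t : 0 <= t -> Defs.RInt dens_NLoS 0 t = 1 - Ecdf (1 * t) 0.
Proof.
  intros Ht. assert (H := is_RInt_pois 1 0 t ltac:(lra)).
  assert (H' : is_RInt dens_NLoS 0 t ((1 - Ecdf (1 * t) 0) / 1)).
  { apply (is_RInt_ext (fun u => pois (1 * u) 0)). intros; now rewrite dens_NLoS_pois. auto. }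
  rewrite Defs_RInt_eq by (eexists; exact H'). rewrite (is_RInt_unique _ _ _ _ H'). field.
Qed.

Lemma RInt_LoS K t : 0 <= K -> 0 <= t -> Defs.RInt (dens_LoS K) 0 t = RInt (dL K) 0 t.
Proof.
  intros HK Ht.
  assert (E : forall x, Rmin 0 t < x < Rmax 0 t -> dL K x = dens_LoS K x).
  { intros x Hx. rewrite Rmin_left in Hx by auto. symmetry. apply dens_LoS_dL; lra. }
  rewrite Defs_RInt_eq. symmetry. apply RInt_ext. auto.
  apply (ex_RInt_ext (dL K)); auto. apply ex_RInt_cont, dL_cont.
Qed.

Lemma FL_cont K : forall t, continuous (fun t => RInt (dL K) 0 t) t.
Proof. apply cont_RInt. apply dL_cont. Qed.

Lemma NLoS_cont x : continuous (fun y => pois (1 * y) 0) x.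
Proof. apply pois_cont_lin. Qed.

Lemma Ecdf_lin_cont s j x : continuous (fun y => Ecdf (s * y) j) x.
Proof. apply contR_derive. eexists.
  apply (is_derive_comp (fun y => Ecdf y j) (fun y => s * y)). apply Ecdf_derive.
  auto_derive; auto. Qed.

Section Cases.
Variables bm bI gt : R.
Hypothesis Hbm : 0 < bm.
Hypothesis HbI : 0 < bI.
Hypothesis Hgt : 0 < gt.
Let c := gt * bI / bm.
Lemma c_pos : 0 < c. Proof. unfold c. apply Rdiv_lt_0_compat; nra. Qed.
Lemma c_arg y : gt * bI * y / bm = c * y. Proof. unfold c. field. lra. Qed.

Lemma case_NN : Iinf (fun y => dens_NLoS y * Defs.RInt dens_NLoS 0 (gt * bI * y / bm)) 0
                     (po_NN_closed bm bI gt).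
Proof.
  assert (Hc := c_pos).
  replace (po_NN_closed bm bI gt) with (1 - W (c / (1 + c)) 0 0).
  2:{ rewrite W_0k. unfold po_NN_closed, c. simpl. field. split; nra. }
  apply (Iinf_ext (fun y => 1 * pois (1 * y) 0 * (1 - Ecdf (c * y) 0))).
  - intros y Hy. rewrite c_arg, dens_NLoS_pois, RInt_NLoS by nra. rewrite !Rmult_1_l. reflexivity.
  - apply term_Iinf; lra.
Qed.

Lemma u_nonneg x al k s j m y : 0 <= x -> 0 < al -> 0 <= s -> 0 <= y ->
  0 <= pois x m * (al * pois (al * y) k * (1 - Ecdf (s * y) j)).
Proof.
  intros. apply Rmult_le_pos. apply pois_ge0; auto. apply Rmult_le_pos. apply Rmult_le_pos. lra.
  apply pois_ge0; nra. assert (Ecdf (s * y) j <= 1) by (apply Ecdf_le1; nra). lra.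
Qed.

Lemma u_bound x al k s j m y : 0 <= x -> 0 < al -> 0 <= s -> 0 <= y ->
  pois x m * (al * pois (al * y) k * (1 - Ecdf (s * y) j)) <= pois x m * al.
Proof.
  intros. apply Rmult_le_compat_l. apply pois_ge0; auto.
  assert (0 <= Ecdf (s * y) j) by (apply Ecdf_ge0; nra).
  assert (pois (al * y) k <= 1) by (apply pois_le1; nra).
  assert (0 <= pois (al * y) k) by (apply pois_ge0; nra).
  assert (0 <= al * pois (al * y) k <= al) by (split; nra). nra.
Qed.

Lemma case_LN Km : 0 < Km ->
  Iinf (fun y => dens_NLoS y * Defs.RInt (dens_LoS Km) 0 (gt * bI * y / bm)) 0
       (po_LN_closed bm bI gt Km).
Proof.
  intros HK. assert (Hc := c_pos).
  set (rho := (/ 2 * c) / (1 + / 2 * c)).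
  replace (po_LN_closed bm bI gt Km) with (rho * exp (- Km * (1 - rho))).
  2:{ unfold po_LN_closed, rho, c. f_equal. field. split; nra. f_equal. field. split; nra. }
  apply (Iinf_ext (fun y => pois (1 * y) 0 * RInt (dL Km) 0 (c * y))).
  { intros y Hy. rewrite c_arg, dens_NLoS_pois, RInt_LoS; auto; nra. }
  apply series_Iinf with (u := fun j y => pois Km j * (1 * pois (1 * y) 0 * (1 - Ecdf ((/ 2 * c) * y) j)))
                         (A := fun j => pois Km j * (1 - W rho j 0)).
  - intros n x Hx. apply u_nonneg; lra.
  - intros y Hy. apply (is_seriesR_ext (fun j => pois (1 * y) 0 * (pois Km j * (1 - Ecdf (/ 2 * (c * y)) j)))).
    intros j. replace (/ 2 * (c * y)) with ((/ 2 * c) * y) by ring. ring.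
    apply is_seriesR_scal. apply FL_series; nra.
  - intros b Hb. exists (fun j => pois Km j * 1). split. apply ex_series_pois_scal.
    intros n x Hx. apply u_bound; lra.
  - intros b _. apply ex_RInt_cont. intros x. apply contR_mult. apply NLoS_cont.
    apply (contR_comp (fun y => c * y) (fun t => RInt (dL Km) 0 t)).
    apply contR_derive. auto_derive. auto. apply FL_cont.
  - intros j. apply (Iinf_scal (fun y => 1 * pois (1 * y) 0 * (1 - Ecdf ((/ 2 * c) * y) j))).
    unfold rho. apply term_Iinf; lra.
  - apply (is_seriesR_ext (fun j => rho * (pois Km j * rho ^ j))).
    intros j. rewrite W_j0. simpl pow. ring.
    apply is_seriesR_scal. replace (- Km * (1 - rho)) with (- Km * (1 - rho)) by ring.
    apply is_series_pois_r.
Qed.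

Lemma case_NL KI : 0 < KI ->
  Iinf (fun y => dens_LoS KI y * Defs.RInt dens_NLoS 0 (gt * bI * y / bm)) 0
       (po_NL_closed bm bI gt KI).
Proof.
  intros HK. assert (Hc := c_pos).
  set (rho := c / (/ 2 + c)).
  replace (po_NL_closed bm bI gt KI) with (1 - (1 - rho) * exp (- KI * (1 - (1 - rho)))).
  2:{ unfold po_NL_closed, rho, c. f_equal. f_equal. field. split; nra. f_equal. field. split; nra. }
  apply (Iinf_ext (fun y => dL KI y * (1 - Ecdf (c * y) 0))).
  { intros y Hy. rewrite c_arg, RInt_NLoS, dens_LoS_dL by nra. rewrite Rmult_1_l. reflexivity. }
  apply series_Iinf with (u := fun k y => pois KI k * (/ 2 * pois (/ 2 * y) k * (1 - Ecdf (c * y) 0)))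
                         (A := fun k => pois KI k * (1 - W rho 0 k)).
  - intros n x Hx. apply u_nonneg; lra.
  - intros y Hy. apply (is_seriesR_ext (fun k => (1 - Ecdf (c * y) 0) * (pois KI k * (/ 2 * pois (/ 2 * y) k)))).
    intros k. ring.
    replace (dL KI y * (1 - Ecdf (c * y) 0)) with ((1 - Ecdf (c * y) 0) * dL KI y) by ring. apply is_seriesR_scal. apply dL_series.
  - intros b Hb. exists (fun j => pois KI j * / 2). split. apply ex_series_pois_scal.
    intros n x Hx. apply u_bound; lra.
  - intros b _. apply ex_RInt_cont. intros x. apply contR_mult. apply dL_cont.
    apply contR_derive. eexists. apply (is_derive_minus (fun _ => 1) (fun y => Ecdf (c * y) 0)).
    apply is_derive_const.
    apply (is_derive_comp (fun y => Ecdf y 0) (fun y => c * y)). apply Ecdf_derive.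
    auto_derive; auto.
  - intros k. apply (Iinf_scal (fun y => / 2 * pois (/ 2 * y) k * (1 - Ecdf (c * y) 0))).
    unfold rho. apply term_Iinf; lra.
  - apply (is_seriesR_ext (fun k => pois KI k - (1 - rho) * (pois KI k * (1 - rho) ^ k))).
    intros k. rewrite W_0k. simpl pow. ring.
    apply is_seriesR_minus. apply is_series_pois. apply is_seriesR_scal. apply is_series_pois_r.
Qed.

Lemma FL_nonneg K t : 0 <= K -> 0 <= t -> 0 <= RInt (dL K) 0 t.
Proof. intros. apply FL_bounds; auto. Qed.

Lemma inner_LL Km k p (a : R) : 0 < Km -> p = (/ 2 * c) / (/ 2 + / 2 * c) ->
  is_series (fun j => pois Km j * (1 - W p j k)) a ->
  Iinf (fun y => / 2 * pois (/ 2 * y) k * RInt (dL Km) 0 (c * y)) 0 a.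
Proof.
  intros HK Hp Ha. assert (Hc := c_pos).
  apply series_Iinf with (u := fun j y => pois Km j * (/ 2 * pois (/ 2 * y) k * (1 - Ecdf ((/ 2 * c) * y) j)))
                         (A := fun j => pois Km j * (1 - W p j k)); auto.
  - intros n x Hx. apply u_nonneg; lra.
  - intros y Hy.
    apply (is_seriesR_ext (fun j => (/ 2 * pois (/ 2 * y) k) * (pois Km j * (1 - Ecdf (/ 2 * (c * y)) j)))).
    intros j. replace (/ 2 * (c * y)) with ((/ 2 * c) * y) by ring. ring.
    apply is_seriesR_scal. apply FL_series; nra.
  - intros b Hb. exists (fun j => pois Km j * / 2). split. apply ex_series_pois_scal.
    intros n x Hx. apply u_bound; lra.
  - intros b _. apply ex_RInt_cont. intros x. apply contR_mult.
    apply contR_derive. unfold pois. auto_derive. auto.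
    apply (contR_comp (fun y => c * y) (fun t => RInt (dL Km) 0 t)).
    apply contR_derive. auto_derive. auto. apply FL_cont.
  - intros j. apply (Iinf_scal (fun y => / 2 * pois (/ 2 * y) k * (1 - Ecdf ((/ 2 * c) * y) j))).
    rewrite Hp. apply term_Iinf; lra.
Qed.

Lemma case_LL Km KI : 0 < Km -> 0 < KI ->
  Iinf (fun y => dens_LoS KI y * Defs.RInt (dens_LoS Km) 0 (gt * bI * y / bm)) 0
       (po_LL_closed bm bI gt Km KI).
Proof.
  intros HKm HKI. assert (Hc := c_pos).
  set (d := bm + gt * bI).
  assert (Hd : 0 < d) by (unfold d; nra).
  set (p := (/ 2 * c) / (/ 2 + / 2 * c)).
  assert (Hp : p = gt * bI / d) by (unfold p, d, c; field; split; apply Rgt_not_eq; nra).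
  assert (Hq : 1 - p = bm / d) by (rewrite Hp; unfold d; field; apply Rgt_not_eq; nra).
  assert (Hp01 : 0 <= p <= 1).
  { rewrite Hp. split. apply Rmult_le_pos; [nra|left; apply Rinv_0_lt_compat; lra].
    apply Rmult_le_reg_r with d; auto. unfold Rdiv. rewrite Rmult_assoc, Rinv_l by lra. unfold d; nra. }
  set (qa := sqrt (2 * Km * bm / d)). set (qb := sqrt (2 * gt * KI * bI / d)).
  assert (HQ : is_series (fun j => pois (Km * (1 - p)) j * Ecdf (KI * p) j) (marcumQ qa qb)).
  { apply (is_seriesR_ext (fun j => pois (qa ^ 2 / 2) j * Ecdf (qb ^ 2 / 2) j)).
    intros j. assert (P1 : 0 <= 2 * Km * bm / d).
    { unfold Rdiv. repeat apply Rmult_le_pos; try lra. left; apply Rinv_0_lt_compat; lra. }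
    assert (P2 : 0 <= 2 * gt * KI * bI / d).
    { unfold Rdiv. repeat apply Rmult_le_pos; try lra. left; apply Rinv_0_lt_compat; lra. }
    unfold qa, qb. rewrite !pow2_sqrt by auto. rewrite Hq, Hp. f_equal; f_equal; field; lra.
    apply marcumQ_series. apply sqrt_pos. }
  destruct (LL_series Km KI p _ ltac:(lra) ltac:(lra) Hp01 HQ) as [a [Ha Htot]].
  replace (po_LL_closed bm bI gt Km KI) with
    (1 - marcumQ qa qb + p * (exp (- (Km * (1 - p) + KI * p)) * J (Km * (1 - p) * (KI * p)))).
  2:{ unfold po_LL_closed. fold d. fold qa qb. rewrite bessel_J. rewrite <- Hp.
      replace (- ((Km * bm + gt * KI * bI) / d)) with (- (Km * (1 - p) + KI * p)).
      2:{ rewrite Hq, Hp. field. lra. }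
      replace ((2 * bm / d * sqrt (gt * Km * KI * bI / bm) / 2) ^ 2) with (Km * (1 - p) * (KI * p)).
      ring.
      replace ((2 * bm / d * sqrt (gt * Km * KI * bI / bm) / 2) ^ 2)
        with ((bm / d) ^ 2 * (sqrt (gt * Km * KI * bI / bm)) ^ 2) by (field; lra).
      rewrite pow2_sqrt. rewrite Hq, Hp. field. split; lra.
      unfold Rdiv. repeat apply Rmult_le_pos; try lra. left; apply Rinv_0_lt_compat; lra. }
  apply (Iinf_ext (fun y => dL KI y * RInt (dL Km) 0 (c * y))).
  { intros y Hy. rewrite c_arg, dens_LoS_dL, RInt_LoS; auto; nra. }
  apply series_Iinf with (u := fun k y => pois KI k * (/ 2 * pois (/ 2 * y) k * RInt (dL Km) 0 (c * y)))
                         (A := fun k => pois KI k * a k); auto.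
  - intros n x Hx. apply Rmult_le_pos. apply pois_ge0; lra. apply Rmult_le_pos. apply Rmult_le_pos. lra.
    apply pois_ge0; lra. apply FL_nonneg; nra.
  - intros y Hy.
    apply (is_seriesR_ext (fun k => RInt (dL Km) 0 (c * y) * (pois KI k * (/ 2 * pois (/ 2 * y) k)))).
    intros k. ring.
    replace (dL KI y * RInt (dL Km) 0 (c * y)) with (RInt (dL Km) 0 (c * y) * dL KI y) by ring.
    apply is_seriesR_scal. apply dL_series.
  - intros b Hb. exists (fun j => pois KI j * / 2). split. apply ex_series_pois_scal.
    intros n x Hx. apply Rmult_le_compat_l. apply pois_ge0; lra.
    assert (0 <= RInt (dL Km) 0 (c * x) <= 1) by (apply FL_bounds; nra).
    assert (pois (/ 2 * x) n <= 1) by (apply pois_le1; nra).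
    assert (0 <= pois (/ 2 * x) n) by (apply pois_ge0; nra). nra.
  - intros b _. apply ex_RInt_cont. intros x. apply contR_mult. apply dL_cont.
    apply (contR_comp (fun y => c * y) (fun t => RInt (dL Km) 0 t)).
    apply contR_derive. auto_derive. auto. apply FL_cont.
  - intros k. apply (Iinf_scal (fun y => / 2 * pois (/ 2 * y) k * RInt (dL Km) 0 (c * y))).
    apply inner_LL with p; auto.
Qed.
End Cases.

Lemma ex_RInt_LoS K t : 0 <= K -> 0 <= t -> ex_RInt (dens_LoS K) 0 t.
Proof.
  intros HK Ht. apply (ex_RInt_ext (dL K)).
  intros x Hx. rewrite Rmin_left in Hx by auto. symmetry. apply dens_LoS_dL; lra.
  apply ex_RInt_cont, dL_cont.
Qed.

Lemma ex_RInt_NLoS t : ex_RInt dens_NLoS 0 t.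
Proof.
  apply (ex_RInt_ext (fun u => pois (1 * u) 0)). intros; now rewrite dens_NLoS_pois.
  apply ex_RInt_cont. intros; apply pois_cont_lin.
Qed.

Lemma RInt_mix pm K t : 0 <= K -> 0 <= t ->
  Defs.RInt (dens_mix pm K) 0 t = pm * Defs.RInt (dens_LoS K) 0 t + (1 - pm) * Defs.RInt dens_NLoS 0 t.
Proof.
  intros HK Ht.
  assert (E1 := ex_RInt_LoS K t HK Ht). assert (E2 := ex_RInt_NLoS t).
  assert (E : ex_RInt (dens_mix pm K) 0 t).
  { unfold dens_mix. apply ex_RIntR_plus; apply ex_RIntR_scal; auto. }
  rewrite !Defs_RInt_eq by auto. unfold dens_mix.
  rewrite RIntR_plus, !RIntR_scal; auto; apply ex_RIntR_scal; auto.
Qed.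

Theorem theorem1 (bm bI gt pm pI Km KI : R)
  (Hbm : 0 < bm) (HbI : 0 < bI) (Hgt : 0 < gt)
  (Hpm : 0 <= pm <= 1) (HpI : 0 <= pI <= 1)
  (HKm : 0 < Km) (HKI : 0 < KI) :
  (* conditional outage probabilities *)
  outage (dens_LoS Km) (dens_LoS KI) bm bI gt = po_LL_closed bm bI gt Km KI /\
  outage (dens_LoS Km) dens_NLoS bm bI gt = po_LN_closed bm bI gt Km /\
  outage dens_NLoS (dens_LoS KI) bm bI gt = po_NL_closed bm bI gt KI /\
  outage dens_NLoS dens_NLoS bm bI gt = po_NN_closed bm bI gt /\
  (* total outage probability *)
  outage (dens_mix pm Km) (dens_mix pI KI) bm bI gt =
      pm * pI * po_LL_closed bm bI gt Km KI
    + pm * (1 - pI) * po_LN_closed bm bI gt Km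
    + (1 - pm) * pI * po_NL_closed bm bI gt KI
    + (1 - pm) * (1 - pI) * po_NN_closed bm bI gt.
Proof.
  assert (LL := case_LL bm bI gt Hbm HbI Hgt Km KI HKm HKI).
  assert (LN := case_LN bm bI gt Hbm HbI Hgt Km HKm).
  assert (NL := case_NL bm bI gt Hbm HbI Hgt KI HKI).
  assert (NN := case_NN bm bI gt Hbm HbI Hgt).
  unfold outage.
  refine (conj (Iinf_RInt_inf _ _ _ LL) (conj (Iinf_RInt_inf _ _ _ LN)
     (conj (Iinf_RInt_inf _ _ _ NL) (conj (Iinf_RInt_inf _ _ _ NN) _)))).
  apply Iinf_RInt_inf.
  pose (gLL := fun y => dens_LoS KI y * Defs.RInt (dens_LoS Km) 0 (gt * bI * y / bm)).
  pose (gLN := fun y => dens_NLoS y * Defs.RInt (dens_LoS Km) 0 (gt * bI * y / bm)).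
  pose (gNL := fun y => dens_LoS KI y * Defs.RInt dens_NLoS 0 (gt * bI * y / bm)).
  pose (gNN := fun y => dens_NLoS y * Defs.RInt dens_NLoS 0 (gt * bI * y / bm)).
  apply (Iinf_ext (fun y => pm * pI * gLL y + pm * (1 - pI) * gLN y
                           + (1 - pm) * pI * gNL y + (1 - pm) * (1 - pI) * gNN y)).
  - intros y Hy. unfold gLL, gLN, gNL, gNN.
    assert (0 <= gt * bI * y / bm).
    { unfold Rdiv. repeat apply Rmult_le_pos; try lra. left; apply Rinv_0_lt_compat; lra. }
    rewrite (RInt_mix pm Km) by lra. unfold dens_mix. ring.
  - apply (Iinf_plus (fun y => pm * pI * gLL y + pm * (1 - pI) * gLN y + (1 - pm) * pI * gNL y)
                     (fun y => (1 - pm) * (1 - pI) * gNN y)).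
    apply (Iinf_plus (fun y => pm * pI * gLL y + pm * (1 - pI) * gLN y)
                     (fun y => (1 - pm) * pI * gNL y)).
    apply (Iinf_plus (fun y => pm * pI * gLL y) (fun y => pm * (1 - pI) * gLN y)).
    apply (Iinf_scal gLL). exact LL.
    apply (Iinf_scal gLN). exact LN.
    apply (Iinf_scal gNL). exact NL.
    apply (Iinf_scal gNN). exact NN.
Qed.
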